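(* Let $U\subseteq\mathbb{C}$ be open, let $f \in \operatorname{Hol}(U,\mathbb{C}_+)$, and let $y_0 \in U\cap\mathbb{R}$ with $f(y_0) \in \mathbb{C}_+$. Then there exists an open neighbourhood $\Omega$ of $(0, y_0)$ in $\mathbb{R}^2$ on which the equation $\lambda(x,y) = f(y - \lambda(x,y)\,x)$ has a unique $C^1$ solution $\lambda\colon \Omega \to \mathbb{C}_+$.
   Context: $\mathbb{C}_+$ is the upper half-plane and $\operatorname{Hol}(U,\mathbb{C}_+)$ the set of holomorphic functions $U\to\mathbb{C}_+$. *)

(* Defs.v *)
From Stdlib Require Import Reals.
From Coquelicot Require Import Coquelicot.
Open Scope R_scope.

Definition upper_half (z : C) : Prop := 0 < Im z.

Definition holomorphic_on (U : C -> Prop) (f : C -> C) : Prop :=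
  forall z : C, U z -> @ex_derive C_AbsRing C_NormedModule f z.

Definition Hol_upper (U : C -> Prop) (f : C -> C) : Prop :=
  holomorphic_on U f /\ forall z, U z -> upper_half (f z).

Definition is_partial_x (lam : R * R -> C) (p : R * R) (d : C) : Prop :=
  @is_derive R_AbsRing C_R_NormedModule (fun t => lam (t, snd p)) (fst p) d.
Definition is_partial_y (lam : R * R -> C) (p : R * R) (d : C) : Prop :=
  @is_derive R_AbsRing C_R_NormedModule (fun t => lam (fst p, t)) (snd p) d.

Definition C1_on (Om : R * R -> Prop) (lam : R * R -> C) : Prop :=
  exists dx dy : R * R -> C,
    forall p, Om p ->
      is_partial_x lam p (dx p) /\ is_partial_y lam p (dy p) /\
      continuous lam p /\
      @continuous _ C_UniformSpace dx p /\ @continuous _ C_UniformSpace dy p.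

Definition solves_on (U : C -> Prop) (f : C -> C) (Om : R * R -> Prop)
  (lam : R * R -> C) : Prop :=
  forall p, Om p ->
    upper_half (lam p) /\
    U (RtoC (snd p) - lam p * RtoC (fst p))%C /\
    lam p = f (RtoC (snd p) - lam p * RtoC (fst p))%C.

(* Main.v *)
Require Import Defs.
From Stdlib Require Import Reals.
From Coquelicot Require Import Coquelicot.
From Stdlib Require Import Lra Lia Classical IndefiniteDescription.
Open Scope R_scope.

Lemma normCR (z : C) : @norm R_AbsRing C_R_NormedModule z = Cmod z.
Proof.
  destruct z as [x y]. unfold norm; simpl. unfold prod_norm, Cmod; simpl.
  unfold norm; simpl. unfold abs; simpl. rewrite !Rmult_1_r, <- !Rabs_mult, !Rabs_right by nra. reflexivity.
Qed.

Lemma Cmod_fst (z : C) : Rabs (fst z) <= Cmod z.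
Proof. apply Rle_trans with (2 := Rmax_Cmod z). apply Rmax_l. Qed.
Lemma Cmod_snd (z : C) : Rabs (snd z) <= Cmod z.
Proof. apply Rle_trans with (2 := Rmax_Cmod z). apply Rmax_r. Qed.
Lemma Cmod_le_sum (z : C) : Cmod z <= Rabs (fst z) + Rabs (snd z).
Proof.
  destruct z as [x y]. unfold Cmod; simpl.
  apply Rsqr_incr_0_var. 2: generalize (Rabs_pos x) (Rabs_pos y); lra.
  rewrite Rsqr_sqrt. 2: nra. simpl. rewrite !Rmult_1_r.
  unfold Rsqr.
  assert (Hx : x * x = Rabs x * Rabs x) by (rewrite <- Rabs_mult; rewrite Rabs_right; nra).
  assert (Hy : y * y = Rabs y * Rabs y) by (rewrite <- Rabs_mult; rewrite Rabs_right; nra).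
  rewrite Hx, Hy. generalize (Rabs_pos x) (Rabs_pos y). intros. nra.
Qed.

Lemma cont_of_Cmod {T : UniformSpace} (phi : T -> C) (x : T) :
  (forall eps, 0 < eps -> locally x (fun y => Cmod (phi y - phi x)%C < eps)) ->
  @continuous T C_UniformSpace phi x.
Proof.
  intros H. unfold continuous. apply filterlim_locally. intros eps.
  generalize (H eps (cond_pos eps)). apply filter_imp. intros y Hy.
  split; simpl; unfold AbsRing_ball, abs, minus, plus, opp; simpl.
  - eapply Rle_lt_trans. 2: exact Hy. 
    generalize (Cmod_fst (phi y - phi x)%C). destruct (phi y), (phi x); simpl. unfold abs, minus, plus, opp; simpl. intros; lra.
  - eapply Rle_lt_trans. 2: exact Hy.
    generalize (Cmod_snd (phi y - phi x)%C). destruct (phi y), (phi x); simpl. unfold abs, minus, plus, opp; simpl. intros; lra.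
Qed.

Lemma Cmod_of_cont {T : UniformSpace} (phi : T -> C) (x : T) :
  @continuous T C_UniformSpace phi x ->
  (forall eps, 0 < eps -> locally x (fun y => Cmod (phi y - phi x)%C < eps)).
Proof.
  intros H eps Heps.
  assert (He2 : 0 < eps / 2) by lra.
  generalize (proj1 (filterlim_locally _ _) H (mkposreal _ He2)).
  apply filter_imp. intros y [H1 H2]. simpl in H1, H2.
  unfold AbsRing_ball, abs, minus, plus, opp in H1, H2; simpl in H1, H2.
  eapply Rle_lt_trans. apply Cmod_le_sum.
  destruct (phi y), (phi x); simpl in *. unfold ball in H1, H2; simpl in H1, H2; unfold AbsRing_ball, abs, minus, plus, opp in H1, H2; simpl in H1, H2. lra.
Qed.

Lemma locally_R (t : R) (P : R -> Prop) :
  (exists del, 0 < del /\ forall s, Rabs (s - t) < del -> P s) -> locally t P.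
Proof.
  intros [d [Hd H]]. exists (mkposreal d Hd). intros s Hs. apply H. exact Hs.
Qed.

Lemma locally_R2 (p : R * R) (P : R * R -> Prop) :
  (exists del, 0 < del /\ forall q, Rabs (fst q - fst p) < del -> Rabs (snd q - snd p) < del -> P q) -> locally p P.
Proof.
  intros [d [Hd H]]. exists (mkposreal d Hd). intros q [H1 H2]. apply H. exact H1. exact H2.
Qed.

Lemma locally_R2_inv (p : R * R) (P : R * R -> Prop) : locally p P ->
  (exists del, 0 < del /\ forall q, Rabs (fst q - fst p) < del -> Rabs (snd q - snd p) < del -> P q).
Proof.
  intros [d H]. exists d. split. apply cond_pos. intros q H1 H2. apply H. split. exact H1. exact H2.
Qed.

Lemma locally_R_inv (p : R) (P : R -> Prop) : locally p P ->
  (exists del, 0 < del /\ forall q, Rabs (q - p) < del -> P q).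
Proof.
  intros [d H]. exists d. split. apply cond_pos. intros q H1. apply H. exact H1.
Qed.

Lemma ex_RInt_C (phi : R -> C) (a b : R) :
  (forall t, Rmin a b <= t <= Rmax a b -> forall eps, 0 < eps -> exists del, 0 < del /\
     forall s, Rabs (s - t) < del -> Cmod (phi s - phi t)%C < eps) ->
  @ex_RInt C_R_CompleteNormedModule phi a b.
Proof.
  intros H. apply ex_RInt_continuous. intros t Ht.
  apply (cont_of_Cmod (T := R_UniformSpace)). intros eps Heps.
  apply locally_R. apply H; auto.
Qed.

Definition Ccont (g : C -> C) (z : C) := forall eps, 0 < eps -> exists del, 0 < del /\
  forall w, Cmod (w - z)%C < del -> Cmod (g w - g z)%C < eps.
Definition Cdiff (g : C -> C) (z l : C) := forall eps, 0 < eps -> exists del, 0 < del /\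
  forall w, Cmod (w - z)%C < del -> Cmod (g w - g z - l * (w - z))%C <= eps * Cmod (w - z)%C.

Lemma Cdiff_of_ex_derive (f : C -> C) (z : C) :
  @ex_derive C_AbsRing C_NormedModule f z -> exists l, Cdiff f z l.
Proof.
  intros [l [_ Hd]]. exists l. intros eps Heps.
  assert (Hz : @is_filter_lim (AbsRing_NormedModule C_AbsRing) (@locally (AbsRing_UniformSpace C_AbsRing) z) z) by (intros P HP; exact HP).
  specialize (Hd z Hz (mkposreal eps Heps)).
  destruct Hd as [d Hd]. exists d. split. apply cond_pos.
  intros w Hw. specialize (Hd w Hw). simpl in Hd.
  unfold norm, minus, plus, opp, scal, mult in Hd; simpl in Hd. unfold abs in Hd; simpl in Hd.
  unfold ball in Hw; simpl in Hw; unfold AbsRing_ball, abs, minus, plus, opp in Hw; simpl in Hw.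
  eapply Rle_trans; [|exact Hd]. right. f_equal. unfold mult; simpl. ring.
Qed.

Lemma Cmod_minus_le (a b : C) : Cmod (a - b)%C <= Cmod a + Cmod b.
Proof. unfold Cminus. eapply Rle_trans. apply Cmod_triangle. rewrite Cmod_opp. lra. Qed.
Lemma Cmod_sym (a b : C) : Cmod (a - b)%C = Cmod (b - a)%C.
Proof. rewrite <- Cmod_opp. f_equal. ring. Qed.
Lemma Cmod_rev (a b : C) : Cmod a - Cmod b <= Cmod (a - b)%C.
Proof.
  generalize (Cmod_triangle (a - b)%C b). replace (a - b + b)%C with a by ring. lra.
Qed.
Lemma Cmod_tri (a b : C) : Cmod (a + b)%C <= Cmod a + Cmod b.
Proof. apply Cmod_triangle. Qed.
Lemma Cmod_tri3 (a b c : C) : Cmod (a + b + c)%C <= Cmod a + Cmod b + Cmod c.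
Proof. eapply Rle_trans. apply Cmod_triangle. generalize (Cmod_triangle a b). lra. Qed.

Lemma Ccont_of_Cdiff g z l : Cdiff g z l -> Ccont g z.
Proof.
  intros H eps Heps. destruct (H 1 Rlt_0_1) as [d [Hd Hw]].
  generalize (Cmod_ge_0 l); intro Hl.
  exists (Rmin d (eps / (1 + Cmod l + 1))). split.
  { apply Rmin_pos. lra. apply Rdiv_lt_0_compat; lra. }
  intros w Hwz.
  assert (H1 : Cmod (w - z)%C < d) by (eapply Rlt_le_trans; [exact Hwz| apply Rmin_l]).
  assert (H2 : Cmod (w - z)%C < eps / (1 + Cmod l + 1)) by (eapply Rlt_le_trans; [exact Hwz| apply Rmin_r]).
  specialize (Hw w H1).
  replace (g w - g z)%C with ((g w - g z - l * (w - z)) + l * (w - z))%C by ring.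
  eapply Rle_lt_trans. apply Cmod_triangle. rewrite Cmod_mult.
  generalize (Cmod_ge_0 (w - z)%C); intro.
  assert (Cmod (w - z)%C * (1 + Cmod l + 1) < eps).
  { apply Rmult_lt_reg_r with (/ (1 + Cmod l + 1)). apply Rinv_0_lt_compat; lra.
    rewrite Rmult_assoc, Rinv_r by lra. rewrite Rmult_1_r. exact H2. }
  nra.
Qed.

Lemma Cdiff_const (k z : C) : Cdiff (fun _ => k) z 0.
Proof.
  intros eps Heps. exists 1. split. lra. intros w _.
  replace (k - k - 0 * (w - z))%C with (RtoC 0) by ring. rewrite Cmod_0.
  generalize (Cmod_ge_0 (w - z)%C). nra.
Qed.

Lemma Cdiff_id (z : C) : Cdiff (fun w => w) z 1.
Proof.
  intros eps Heps. exists 1. split. lra. intros w _.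
  replace (w - z - 1 * (w - z))%C with (RtoC 0) by ring. rewrite Cmod_0.
  generalize (Cmod_ge_0 (w - z)%C). nra.
Qed.

Lemma Cdiff_plus g1 g2 z l1 l2 : Cdiff g1 z l1 -> Cdiff g2 z l2 ->
  Cdiff (fun w => g1 w + g2 w)%C z (l1 + l2)%C.
Proof.
  intros H1 H2 eps Heps.
  destruct (H1 (eps/2)) as [d1 [Hd1 K1]]. lra.
  destruct (H2 (eps/2)) as [d2 [Hd2 K2]]. lra.
  exists (Rmin d1 d2). split. apply Rmin_pos; lra.
  intros w Hw.
  specialize (K1 w (Rlt_le_trans _ _ _ Hw (Rmin_l _ _))).
  specialize (K2 w (Rlt_le_trans _ _ _ Hw (Rmin_r _ _))).
  replace (g1 w + g2 w - (g1 z + g2 z) - (l1 + l2) * (w - z))%C with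
    ((g1 w - g1 z - l1 * (w - z)) + (g2 w - g2 z - l2 * (w - z)))%C by ring.
  eapply Rle_trans. apply Cmod_triangle. lra.
Qed.

Lemma Cdiff_scal g z l k : Cdiff g z l -> Cdiff (fun w => k * g w)%C z (k * l)%C.
Proof.
  intros H eps Heps.
  generalize (Cmod_ge_0 k); intro Hk.
  destruct (H (eps / (Cmod k + 1))) as [d [Hd K]]. apply Rdiv_lt_0_compat; lra.
  exists d. split. exact Hd. intros w Hw. specialize (K w Hw).
  replace (k * g w - k * g z - k * l * (w - z))%C with (k * (g w - g z - l * (w - z)))%C by ring.
  rewrite Cmod_mult.
  generalize (Cmod_ge_0 (w - z)%C); intro.
  assert (E : Cmod k * (eps / (Cmod k + 1)) <= eps).
  { unfold Rdiv. rewrite <- Rmult_assoc. apply Rmult_le_reg_r with (Cmod k + 1). lra.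
    rewrite Rmult_assoc, Rinv_l by lra. nra. }
  apply Rle_trans with (Cmod k * (eps / (Cmod k + 1) * Cmod (w - z)%C)).
  apply Rmult_le_compat_l; auto.
  rewrite <- Rmult_assoc. apply Rmult_le_compat_r; auto.
Qed.

Lemma small_div (a eps : R) : 0 <= a -> 0 < eps -> 0 < eps / (3 * (a + 1)).
Proof. intros. apply Rdiv_lt_0_compat; lra. Qed.

Lemma mul_div3 (a eps : R) : 0 <= a -> 0 < eps -> a * (eps / (3 * (a + 1))) <= eps / 3.
Proof.
  intros. unfold Rdiv. rewrite Rinv_mult.
  apply Rle_trans with (eps * / 3 * (a * / (a + 1))). right; ring.
  assert (a * / (a + 1) <= 1).
  { apply Rmult_le_reg_r with (a + 1). lra. rewrite Rmult_assoc, Rinv_l by lra. lra. }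
  assert (0 <= eps * / 3) by (apply Rmult_le_pos; [lra| apply Rlt_le, Rinv_0_lt_compat; lra]).
  nra.
Qed.

Lemma Cdiff_mult g1 g2 z l1 l2 : Cdiff g1 z l1 -> Cdiff g2 z l2 ->
  Cdiff (fun w => g1 w * g2 w)%C z (l1 * g2 z + g1 z * l2)%C.
Proof.
  intros H1 H2 eps Heps.
  assert (C2 := Ccont_of_Cdiff _ _ _ H2).
  set (M2 := Cmod (g2 z) + 1).
  generalize (Cmod_ge_0 (g2 z)) (Cmod_ge_0 l1) (Cmod_ge_0 (g1 z)); intros P2 Pl1 Pg1.
  destruct (C2 1 Rlt_0_1) as [da [Hda Ka]].
  destruct (C2 _ (small_div (Cmod l1) eps Pl1 Heps)) as [db [Hdb Kb]].
  destruct (H1 _ (small_div (Cmod (g2 z)) eps P2 Heps)) as [dc [Hdc Kc]].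
  destruct (H2 _ (small_div (Cmod (g1 z)) eps Pg1 Heps)) as [dd [Hdd Kd]].
  exists (Rmin (Rmin da db) (Rmin dc dd)). split.
  { repeat apply Rmin_pos; lra. }
  intros w Hw.
  assert (Hwa : Cmod (w - z)%C < da) by (eapply Rlt_le_trans; [exact Hw|]; eapply Rle_trans; apply Rmin_l).
  assert (Hwb : Cmod (w - z)%C < db) by (eapply Rlt_le_trans; [exact Hw|]; eapply Rle_trans; [apply Rmin_l| apply Rmin_r]).
  assert (Hwc : Cmod (w - z)%C < dc) by (eapply Rlt_le_trans; [exact Hw|]; eapply Rle_trans; [apply Rmin_r| apply Rmin_l]).
  assert (Hwd : Cmod (w - z)%C < dd) by (eapply Rlt_le_trans; [exact Hw|]; eapply Rle_trans; [apply Rmin_r| apply Rmin_r]).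
  specialize (Ka w Hwa). specialize (Kb w Hwb). specialize (Kc w Hwc). specialize (Kd w Hwd).
  replace (g1 w * g2 w - g1 z * g2 z - (l1 * g2 z + g1 z * l2) * (w - z))%C with
    ((g1 w - g1 z - l1 * (w - z)) * g2 w + l1 * (w - z) * (g2 w - g2 z) + g1 z * (g2 w - g2 z - l2 * (w - z)))%C by ring.
  eapply Rle_trans. apply Cmod_tri3. rewrite !Cmod_mult.
  set (e := Cmod (w - z)%C). assert (He : 0 <= e) by apply Cmod_ge_0.
  assert (Hg2w : Cmod (g2 w) <= M2).
  { unfold M2. generalize (Cmod_rev (g2 w) (g2 z)). lra. }
  generalize (Cmod_ge_0 (g2 w)) (Cmod_ge_0 (g2 w - g2 z)%C) (Cmod_ge_0 (g1 w - g1 z - l1 * (w - z))%C)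
    (Cmod_ge_0 (g2 w - g2 z - l2 * (w - z))%C); intros Q1 Q2 Q3 Q4.
  assert (A1 : Cmod (g1 w - g1 z - l1 * (w - z))%C * Cmod (g2 w) <= eps / 3 * e).
  { apply Rle_trans with (eps / (3 * (Cmod (g2 z) + 1)) * e * M2).
    apply Rmult_le_compat; auto.
    generalize (mul_div3 (Cmod (g2 z)) eps P2 Heps). unfold M2.
    intros. 
    replace (eps / (3 * (Cmod (g2 z) + 1)) * e * (Cmod (g2 z) + 1)) with (eps / 3 * e). lra.
    field. lra. }
  assert (A2 : Cmod l1 * e * Cmod (g2 w - g2 z)%C <= eps / 3 * e).
  { generalize (mul_div3 (Cmod l1) eps Pl1 Heps). intros.
    apply Rle_trans with (Cmod l1 * (eps / (3 * (Cmod l1 + 1))) * e). 2: nra.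
    replace (Cmod l1 * e * Cmod (g2 w - g2 z)%C) with (Cmod l1 * Cmod (g2 w - g2 z)%C * e) by ring.
    apply Rmult_le_compat_r; auto. apply Rmult_le_compat_l; auto. lra. }
  assert (A3 : Cmod (g1 z) * Cmod (g2 w - g2 z - l2 * (w - z))%C <= eps / 3 * e).
  { generalize (mul_div3 (Cmod (g1 z)) eps Pg1 Heps). intros.
    apply Rle_trans with (Cmod (g1 z) * (eps / (3 * (Cmod (g1 z) + 1)) * e)).
    apply Rmult_le_compat_l; auto. rewrite <- Rmult_assoc. nra. }
  lra.
Qed.

Lemma Cdiff_invshift (z0 z : C) : z <> z0 ->
  Cdiff (fun w => / (w - z0))%C z (- / ((z - z0) * (z - z0)))%C.
Proof.
  intros Hz eps Heps.
  set (u := (z - z0)%C).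
  assert (Hu : u <> 0%C) by (unfold u; intro E; apply Hz; apply Ceq_minus; exact E).
  assert (Pu : 0 < Cmod u) by (apply Cmod_gt_0; exact Hu).
  exists (Rmin (Cmod u / 2) (eps * (Cmod u * Cmod u * Cmod u) / 2)). split.
  { apply Rmin_pos. lra. apply Rdiv_lt_0_compat; [|lra]. apply Rmult_lt_0_compat; [lra|]. 
    apply Rmult_lt_0_compat; [|lra]. apply Rmult_lt_0_compat; lra. }
  intros w Hw.
  assert (H1 : Cmod (w - z)%C < Cmod u / 2) by (eapply Rlt_le_trans; [exact Hw| apply Rmin_l]).
  assert (H2 : Cmod (w - z)%C < eps * (Cmod u * Cmod u * Cmod u) / 2) by (eapply Rlt_le_trans; [exact Hw| apply Rmin_r]).
  set (v := (w - z0)%C).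
  assert (Hv1 : Cmod u / 2 <= Cmod v).
  { generalize (Cmod_rev u (z - w)%C). replace (u - (z - w))%C with v by (unfold u, v; ring).
    rewrite (Cmod_sym z w). intros; lra. }
  assert (Hv : v <> 0%C) by (intro E; rewrite E, Cmod_0 in Hv1; lra).
  replace (/ v - / u - - / (u * u) * (w - z))%C with
    ((w - z) * (w - z) / (u * u * v))%C.
  2: { fold u v. replace (w - z)%C with (v - u)%C by (unfold u, v; ring). field. split; auto. }
  rewrite Cmod_div. 2: apply Cmult_neq_0; [apply Cmult_neq_0|]; auto.
  rewrite !Cmod_mult.
  set (e := Cmod (w - z)%C). assert (He : 0 <= e) by apply Cmod_ge_0.
  apply Rmult_le_reg_r with (Cmod u * Cmod u * Cmod v).
  { apply Rmult_lt_0_compat; [|lra]. apply Rmult_lt_0_compat; lra. }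
  unfold Rdiv. rewrite Rmult_assoc, Rinv_l.
  2: { apply Rgt_not_eq. apply Rmult_lt_0_compat; [|lra]. apply Rmult_lt_0_compat; lra. }
  rewrite Rmult_1_r.
  assert (e * (Cmod u * Cmod u * Cmod u) / 2 <= e * (Cmod u * Cmod u * Cmod v)).
  { assert (0 <= Cmod u * Cmod u) by nra.
    assert (Cmod u * Cmod u * Cmod u / 2 <= Cmod u * Cmod u * Cmod v) by nra.
    unfold Rdiv. rewrite Rmult_assoc. apply Rmult_le_compat_l. exact He. lra. }
  assert (e * e <= e * (eps * (Cmod u * Cmod u * Cmod u) / 2)) by (apply Rmult_le_compat_l; [exact He| unfold e; lra]).
  apply Rle_trans with (e * (eps * (Cmod u * Cmod u * Cmod u) / 2)). exact H0.
  apply Rle_trans with (eps * (e * (Cmod u * Cmod u * Cmod u) / 2)). right; field.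
  rewrite (Rmult_assoc eps e). apply Rmult_le_compat_l. lra. exact H.
Qed.

Lemma is_RInt_lin2 (f g : R -> R) (a b If Ig al be : R) :
  is_RInt f a b If -> is_RInt g a b Ig ->
  is_RInt (fun t => al * f t + be * g t) a b (al * If + be * Ig).
Proof.
  intros Hf Hg.
  apply (is_RInt_plus (fun t => al * f t) (fun t => be * g t)).
  apply (is_RInt_scal f a b al If Hf).
  apply (is_RInt_scal g a b be Ig Hg).
Qed.

Lemma is_RInt_Cmul (phi : R -> C) (a b : R) (I k : C) :
  @is_RInt C_R_NormedModule phi a b I ->
  @is_RInt C_R_NormedModule (fun t => k * phi t)%C a b (k * I)%C.
Proof.
  intros H.
  assert (H1 := @is_RInt_fct_extend_fst R_NormedModule R_NormedModule phi a b I H).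
  assert (H2 := @is_RInt_fct_extend_snd R_NormedModule R_NormedModule phi a b I H).
  destruct k as [k1 k2].
  apply (@is_RInt_fct_extend_pair R_NormedModule R_NormedModule).
  - assert (E := is_RInt_lin2 _ _ a b _ _ k1 (- k2) H1 H2).
    replace (fst (k1, k2) * fst I - snd (k1, k2) * snd I) with (k1 * fst I + - k2 * snd I) by (simpl; ring).
    revert E. apply is_RInt_ext. intros t _. destruct (phi t). unfold Cmult; simpl. ring.
  - assert (E := is_RInt_lin2 _ _ a b _ _ k1 k2 H2 H1).
    replace (fst (k1, k2) * snd I + snd (k1, k2) * fst I) with (k1 * snd I + k2 * fst I) by (simpl; ring).
    revert E. apply is_RInt_ext. intros t _. destruct (phi t). unfold Cmult; simpl. ring.
Qed.

Definition CInt (phi : R -> C) (a b : R) : C := @RInt C_R_CompleteNormedModule phi a b.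
Definition CexInt (phi : R -> C) (a b : R) : Prop := @ex_RInt C_R_NormedModule phi a b.

Lemma CInt_correct phi a b : CexInt phi a b -> @is_RInt C_R_NormedModule phi a b (CInt phi a b).
Proof. intros H. exact (@RInt_correct C_R_CompleteNormedModule phi a b H). Qed.

Lemma CInt_unique phi a b I : @is_RInt C_R_NormedModule phi a b I -> CInt phi a b = I.
Proof. intros H. exact (@is_RInt_unique C_R_CompleteNormedModule phi a b I H). Qed.

Lemma CexInt_mul phi a b k : CexInt phi a b -> CexInt (fun t => k * phi t)%C a b.
Proof. intros H. eexists. apply is_RInt_Cmul. apply CInt_correct, H. Qed.

Lemma CInt_mul phi a b k : CexInt phi a b -> CInt (fun t => k * phi t)%C a b = (k * CInt phi a b)%C.
Proof. intros H. apply CInt_unique. apply is_RInt_Cmul. apply CInt_correct, H. Qed.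

Lemma is_RInt_Cplus phi psi a b I J : @is_RInt C_R_NormedModule phi a b I ->
  @is_RInt C_R_NormedModule psi a b J -> @is_RInt C_R_NormedModule (fun t => phi t + psi t)%C a b (I + J)%C.
Proof. intros H1 H2. exact (@is_RInt_plus C_R_NormedModule phi psi a b I J H1 H2). Qed.

Lemma CexInt_plus phi psi a b : CexInt phi a b -> CexInt psi a b -> CexInt (fun t => phi t + psi t)%C a b.
Proof. intros H1 H2. eexists. apply is_RInt_Cplus; apply CInt_correct; assumption. Qed.

Lemma CInt_plus phi psi a b : CexInt phi a b -> CexInt psi a b ->
  CInt (fun t => phi t + psi t)%C a b = (CInt phi a b + CInt psi a b)%C.
Proof. intros H1 H2. apply CInt_unique. apply is_RInt_Cplus; apply CInt_correct; assumption. Qed.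

Lemma CexInt_ext phi psi a b : (forall t, Rmin a b < t < Rmax a b -> phi t = psi t) ->
  CexInt phi a b -> CexInt psi a b.
Proof. intros E H. exact (@ex_RInt_ext C_R_NormedModule phi psi a b E H). Qed.

Lemma CInt_ext phi psi a b : (forall t, Rmin a b < t < Rmax a b -> phi t = psi t) ->
  CInt phi a b = CInt psi a b.
Proof. intros E. exact (@RInt_ext C_R_CompleteNormedModule phi psi a b E). Qed.

Lemma CInt_chasles phi a m b : CexInt phi a m -> CexInt phi m b ->
  CInt phi a b = (CInt phi a m + CInt phi m b)%C.
Proof.
  intros H1 H2. apply CInt_unique.
  exact (@is_RInt_Chasles C_R_NormedModule phi a m b _ _ (CInt_correct _ _ _ H1) (CInt_correct _ _ _ H2)).
Qed.

Lemma CexInt_chasles phi a m b : CexInt phi a m -> CexInt phi m b -> CexInt phi a b.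
Proof.
  intros H1 H2. eexists.
  exact (@is_RInt_Chasles C_R_NormedModule phi a m b _ _ (CInt_correct _ _ _ H1) (CInt_correct _ _ _ H2)).
Qed.

Lemma CInt_bound phi a b M : a <= b -> CexInt phi a b ->
  (forall t, a <= t <= b -> Cmod (phi t) <= M) -> Cmod (CInt phi a b) <= (b - a) * M.
Proof.
  intros Hab H HM. rewrite <- normCR.
  apply (@norm_RInt_le_const C_R_NormedModule phi a b). exact Hab.
  intros t Ht. rewrite normCR. apply HM, Ht.
  apply CInt_correct, H.
Qed.

Lemma CInt_const (k : C) a b : CInt (fun _ => k) a b = ((b - a) * k)%C.
Proof.
  apply CInt_unique.
  assert (E := @is_RInt_const C_R_NormedModule a b k).
  revert E. destruct k as [k1 k2]. unfold scal; simpl. unfold prod_scal, scal; simpl. unfold mult; simpl.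
  unfold Cmult, RtoC; simpl.
  replace ((b + - a) * k1 - (0 + - 0) * k2) with ((b-a) * k1) by ring.
  replace ((b + - a) * k2 + (0 + - 0) * k1) with ((b-a) * k2) by ring. auto.
Qed.

Lemma CInt_snd phi a b : CexInt phi a b -> snd (CInt phi a b) = RInt (fun t => snd (phi t)) a b.
Proof.
  intros H. symmetry. apply is_RInt_unique.
  exact (@is_RInt_fct_extend_snd R_NormedModule R_NormedModule phi a b _ (CInt_correct _ _ _ H)).
Qed.

Lemma CexInt_of_cont (phi : R -> C) (a b : R) :
  (forall t, Rmin a b <= t <= Rmax a b -> forall eps, 0 < eps -> exists del, 0 < del /\
     forall s, Rabs (s - t) < del -> Cmod (phi s - phi t)%C < eps) -> CexInt phi a b.
Proof. intros H. exact (ex_RInt_C phi a b H). Qed.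

Definition HI (h : C -> C) (y a b : R) : C := CInt (fun t => h (t, y)) a b.
Definition VI (h : C -> C) (x c d : R) : C := CInt (fun t => h (x, t)) c d.
Definition Bd (h : C -> C) (a b c d : R) : C :=
  (HI h c a b + Ci * VI h b c d - HI h d a b - Ci * VI h a c d)%C.
Definition BdInt (h : C -> C) (a b c d : R) : Prop :=
  CexInt (fun t => h (t, c)) a b /\ CexInt (fun t => h (t, d)) a b /\
  CexInt (fun t => h (a, t)) c d /\ CexInt (fun t => h (b, t)) c d.
Definition inR (a b c d : R) (z : C) : Prop := a <= fst z <= b /\ c <= snd z <= d.
Definition onBd (a b c d : R) (z : C) : Prop :=
  inR a b c d z /\ (fst z = a \/ fst z = b \/ snd z = c \/ snd z = d).

Lemma Cmod_h (s t y : R) : Cmod ((s, y) - (t, y))%C = Rabs (s - t).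
Proof.
  rewrite <- Cmod_R. f_equal. unfold Cminus, Cplus, Copp, RtoC; simpl. f_equal; ring.
Qed.
Lemma Cmod_v (s t x : R) : Cmod ((x, s) - (x, t))%C = Rabs (s - t).
Proof.
  replace ((x, s) - (x, t))%C with ((0, s - t) : C) by (unfold Cminus, Cplus, Copp; simpl; f_equal; ring).
  unfold Cmod; simpl. rewrite <- sqrt_Rsqr_abs. f_equal. unfold Rsqr; ring.
Qed.

Lemma CexInt_h (h : C -> C) (y a b : R) : a <= b ->
  (forall t, a <= t <= b -> Ccont h (t, y)) -> CexInt (fun t => h (t, y)) a b.
Proof.
  intros Hab H. apply CexInt_of_cont. intros t Ht eps Heps.
  rewrite Rmin_left, Rmax_right in Ht by lra.
  destruct (H t Ht eps Heps) as [d [Hd K]]. exists d. split. exact Hd.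
  intros s Hs. apply K. rewrite Cmod_h. exact Hs.
Qed.
Lemma CexInt_v (h : C -> C) (x c d : R) : c <= d ->
  (forall t, c <= t <= d -> Ccont h (x, t)) -> CexInt (fun t => h (x, t)) c d.
Proof.
  intros Hab H. apply CexInt_of_cont. intros t Ht eps Heps.
  rewrite Rmin_left, Rmax_right in Ht by lra.
  destruct (H t Ht eps Heps) as [del [Hd K]]. exists del. split. exact Hd.
  intros s Hs. apply K. rewrite Cmod_v. exact Hs.
Qed.

Lemma BdInt_of_cont h a b c d : a <= b -> c <= d ->
  (forall z, onBd a b c d z -> Ccont h z) -> BdInt h a b c d.
Proof.
  intros Hab Hcd H. unfold onBd, inR in H. repeat split.
  - apply CexInt_h; auto. intros t Ht. apply H. simpl. split; [split; lra| tauto].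
  - apply CexInt_h; auto. intros t Ht. apply H. simpl. split; [split; lra| tauto].
  - apply CexInt_v; auto. intros t Ht. apply H. simpl. split; [split; lra| tauto].
  - apply CexInt_v; auto. intros t Ht. apply H. simpl. split; [split; lra| tauto].
Qed.

Lemma BdInt_plus h1 h2 a b c d : BdInt h1 a b c d -> BdInt h2 a b c d ->
  BdInt (fun z => h1 z + h2 z)%C a b c d.
Proof.
  intros (A1 & A2 & A3 & A4) (B1 & B2 & B3 & B4). repeat split; apply CexInt_plus; assumption.
Qed.
Lemma BdInt_mul h k a b c d : BdInt h a b c d -> BdInt (fun z => k * h z)%C a b c d.
Proof.
  intros (A1 & A2 & A3 & A4). repeat split; apply CexInt_mul; assumption.
Qed.
Lemma Bd_plus h1 h2 a b c d : BdInt h1 a b c d -> BdInt h2 a b c d ->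
  Bd (fun z => h1 z + h2 z)%C a b c d = (Bd h1 a b c d + Bd h2 a b c d)%C.
Proof.
  intros (A1 & A2 & A3 & A4) (B1 & B2 & B3 & B4). unfold Bd, HI, VI.
  rewrite !CInt_plus by assumption. ring.
Qed.
Lemma Bd_mul h k a b c d : BdInt h a b c d ->
  Bd (fun z => k * h z)%C a b c d = (k * Bd h a b c d)%C.
Proof.
  intros (A1 & A2 & A3 & A4). unfold Bd, HI, VI.
  rewrite !CInt_mul by assumption. ring.
Qed.

Lemma Bd_ext h1 h2 a b c d : a <= b -> c <= d -> (forall z, onBd a b c d z -> h1 z = h2 z) ->
  Bd h1 a b c d = Bd h2 a b c d.
Proof.
  intros Hab Hcd E. unfold Bd, HI, VI, onBd, inR in *.
  rewrite (CInt_ext (fun t => h1 (t, c)) (fun t => h2 (t, c))),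
    (CInt_ext (fun t => h1 (t, d)) (fun t => h2 (t, d))),
    (CInt_ext (fun t => h1 (a, t)) (fun t => h2 (a, t))),
    (CInt_ext (fun t => h1 (b, t)) (fun t => h2 (b, t))). reflexivity.
  all: intros t Ht; rewrite ?Rmin_left, ?Rmax_right in Ht by lra; apply E; simpl; split; [split; lra| tauto].
Qed.

Lemma BdInt_ext h1 h2 a b c d : a <= b -> c <= d -> (forall z, onBd a b c d z -> h1 z = h2 z) ->
  BdInt h1 a b c d -> BdInt h2 a b c d.
Proof.
  intros Hab Hcd E (A1 & A2 & A3 & A4). unfold onBd, inR in *. repeat split.
  eapply CexInt_ext; [| exact A1]. 3: eapply CexInt_ext; [| exact A3].
  2: eapply CexInt_ext; [| exact A2]. 4: eapply CexInt_ext; [| exact A4].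
  all: intros t Ht; rewrite ?Rmin_left, ?Rmax_right in Ht by lra; apply E; simpl; split; [split; lra| tauto].
Qed.

Lemma Bd_bound h a b c d M : a <= b -> c <= d -> BdInt h a b c d ->
  (forall z, onBd a b c d z -> Cmod (h z) <= M) -> Cmod (Bd h a b c d) <= 2 * ((b - a) + (d - c)) * M.
Proof.
  intros Hab Hcd (A1 & A2 & A3 & A4) HM. unfold onBd, inR in HM.
  assert (B1 : Cmod (HI h c a b) <= (b - a) * M).
  { apply CInt_bound; auto. intros t Ht. apply HM. simpl. split; [split; lra| tauto]. }
  assert (B2 : Cmod (HI h d a b) <= (b - a) * M).
  { apply CInt_bound; auto. intros t Ht. apply HM. simpl. split; [split; lra| tauto]. }
  assert (B3 : Cmod (VI h a c d) <= (d - c) * M).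
  { apply CInt_bound; auto. intros t Ht. apply HM. simpl. split; [split; lra| tauto]. }
  assert (B4 : Cmod (VI h b c d) <= (d - c) * M).
  { apply CInt_bound; auto. intros t Ht. apply HM. simpl. split; [split; lra| tauto]. }
  unfold Bd. unfold Cminus.
  eapply Rle_trans. apply Cmod_triangle. rewrite Cmod_opp, Cmod_mult, Cmod_Ci.
  eapply Rle_trans. apply Rplus_le_compat_r. apply Cmod_triangle. rewrite Cmod_opp.
  eapply Rle_trans. apply Rplus_le_compat_r. apply Rplus_le_compat_r. apply Cmod_triangle.
  rewrite Cmod_mult, Cmod_Ci. lra.
Qed.

Lemma Bd_cutV h a m b c d :
  CexInt (fun t => h (t, c)) a m -> CexInt (fun t => h (t, c)) m b ->
  CexInt (fun t => h (t, d)) a m -> CexInt (fun t => h (t, d)) m b ->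
  Bd h a b c d = (Bd h a m c d + Bd h m b c d)%C.
Proof.
  intros H1 H2 H3 H4. unfold Bd, HI.
  rewrite (CInt_chasles _ a m b H1 H2), (CInt_chasles _ a m b H3 H4). ring.
Qed.

Lemma Bd_cutH h a b c m d :
  CexInt (fun t => h (a, t)) c m -> CexInt (fun t => h (a, t)) m d ->
  CexInt (fun t => h (b, t)) c m -> CexInt (fun t => h (b, t)) m d ->
  Bd h a b c d = (Bd h a b c m + Bd h a b m d)%C.
Proof.
  intros H1 H2 H3 H4. unfold Bd, VI.
  rewrite (CInt_chasles _ c m d H1 H2), (CInt_chasles _ c m d H3 H4). ring.
Qed.

Lemma is_RInt_idR a b : is_RInt (fun t => t) a b ((b * b - a * a) / 2).
Proof.
  replace ((b * b - a * a) / 2) with (minus (b * b / 2) (a * a / 2)).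
  2: { unfold minus, plus, opp; simpl. field. }
  apply (is_RInt_derive (fun t => t * t / 2) (fun t => t)).
  - intros x _. auto_derive. auto. field.
  - intros x _. apply continuous_id.
Qed.

Lemma is_RInt_constR (y a b : R) : is_RInt (fun _ => y) a b (y * (b - a)).
Proof.
  replace (y * (b - a)) with (scal (b - a) y). apply (@is_RInt_const R_NormedModule).
  unfold scal; simpl. unfold mult; simpl. ring.
Qed.

Lemma CInt_hid y a b : CInt (fun t => (t, y) : C) a b = ((b * b - a * a) / 2, y * (b - a)).
Proof.
  apply CInt_unique.
  apply (@is_RInt_fct_extend_pair R_NormedModule R_NormedModule); simpl.
  apply is_RInt_idR. apply is_RInt_constR.
Qed.
Lemma CInt_vid x c d : CInt (fun t => (x, t) : C) c d = (x * (d - c), (d * d - c * c) / 2).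
Proof.
  apply CInt_unique.
  apply (@is_RInt_fct_extend_pair R_NormedModule R_NormedModule); simpl.
  apply is_RInt_constR. apply is_RInt_idR.
Qed.

Lemma BdInt_const k a b c d : BdInt (fun _ => k) a b c d.
Proof. repeat split; eexists; apply (@is_RInt_const C_R_NormedModule). Qed.
Lemma BdInt_id a b c d : BdInt (fun z => z) a b c d.
Proof.
  repeat split; eexists.
  - apply (@is_RInt_fct_extend_pair R_NormedModule R_NormedModule); simpl. apply is_RInt_idR. apply is_RInt_constR.
  - apply (@is_RInt_fct_extend_pair R_NormedModule R_NormedModule); simpl. apply is_RInt_idR. apply is_RInt_constR.
  - apply (@is_RInt_fct_extend_pair R_NormedModule R_NormedModule); simpl. apply is_RInt_constR. apply is_RInt_idR.
  - apply (@is_RInt_fct_extend_pair R_NormedModule R_NormedModule); simpl. apply is_RInt_constR. apply is_RInt_idR.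
Qed.

Lemma Bd_affine (al be : C) a b c d : Bd (fun z => al + be * z)%C a b c d = 0%C.
Proof.
  rewrite (Bd_plus (fun _ => al) (fun z => be * z)%C). 2: apply BdInt_const.
  2: apply BdInt_mul, BdInt_id.
  rewrite (Bd_mul (fun z => z)). 2: apply BdInt_id.
  unfold Bd, HI, VI. rewrite !CInt_const, CInt_hid, CInt_hid, CInt_vid, CInt_vid.
  unfold Cminus, Cplus, Copp, Cmult, Ci, RtoC; simpl. f_equal; ring.
Qed.

Lemma pow2_gt (n : nat) : INR n < 2 ^ n.
Proof.
  induction n. simpl. lra.
  rewrite S_INR. simpl. generalize (pow_R1_Rle 2 n). lra.
Qed.

Lemma pow2_big (M del : R) : 0 < del -> exists n, M < del * 2 ^ n.
Proof.
  intros Hd. destruct (INR_unbounded (M / del)) as [n Hn]. exists n.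
  generalize (pow2_gt n). intros.
  apply Rmult_lt_reg_r with (/ del). apply Rinv_0_lt_compat; auto.
  rewrite (Rmult_comm del), Rmult_assoc, Rinv_r, Rmult_1_r by lra. unfold Rdiv in Hn. lra.
Qed.

Record rect := mkR { ra : R; rb : R; rc : R; rd : R }.

Section Goursat.
Variable h : C -> C.
Variables a0 b0 c0 d0 : R.
Hypothesis Hab : a0 <= b0.
Hypothesis Hcd : c0 <= d0.
Hypothesis Hdiff : forall z, inR a0 b0 c0 d0 z -> exists l, Cdiff h z l.

Definition BdR (r : rect) := Bd h (ra r) (rb r) (rc r) (rd r).
Definition sub (r : rect) := a0 <= ra r /\ ra r <= rb r /\ rb r <= b0 /\ c0 <= rc r /\ rc r <= rd r /\ rd r <= d0.

Lemma cont_R0 z : inR a0 b0 c0 d0 z -> Ccont h z.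
Proof. intros H. destruct (Hdiff z H) as [l Hl]. exact (Ccont_of_Cdiff _ _ _ Hl). Qed.

Lemma exh (y a b : R) : c0 <= y <= d0 -> a0 <= a -> a <= b -> b <= b0 -> CexInt (fun t => h (t, y)) a b.
Proof.
  intros Hy H1 H2 H3. apply CexInt_h. auto. intros t Ht. apply cont_R0. unfold inR; simpl. split; lra.
Qed.
Lemma exv (x c d : R) : a0 <= x <= b0 -> c0 <= c -> c <= d -> d <= d0 -> CexInt (fun t => h (x, t)) c d.
Proof.
  intros Hy H1 H2 H3. apply CexInt_v. auto. intros t Ht. apply cont_R0. unfold inR; simpl. split; lra.
Qed.

Ltac exhv := match goal with
  | |- CexInt (fun t => h (t, _)) _ _ => apply exh; lra
  | |- CexInt (fun t => h (_, t)) _ _ => apply exv; lra end.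

Definition q1 (r : rect) := mkR (ra r) ((ra r + rb r) / 2) (rc r) ((rc r + rd r) / 2).
Definition q2 (r : rect) := mkR ((ra r + rb r) / 2) (rb r) (rc r) ((rc r + rd r) / 2).
Definition q3 (r : rect) := mkR (ra r) ((ra r + rb r) / 2) ((rc r + rd r) / 2) (rd r).
Definition q4 (r : rect) := mkR ((ra r + rb r) / 2) (rb r) ((rc r + rd r) / 2) (rd r).

Lemma split4 r : sub r -> BdR r = (BdR (q1 r) + BdR (q2 r) + BdR (q3 r) + BdR (q4 r))%C.
Proof.
  destruct r as [a b c d]. unfold sub, BdR, q1, q2, q3, q4; cbn [ra rb rc rd]. intros (H1 & H2 & H3 & H4 & H5 & H6).
  set (m := (a + b) / 2). set (n := (c + d) / 2).
  assert (a <= m <= b) by (unfold m; lra). assert (c <= n <= d) by (unfold n; lra).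
  rewrite (Bd_cutV h a m b c d).
  2-5: exhv.
  rewrite (Bd_cutH h a m c n d), (Bd_cutH h m b c n d).
  2-9: exhv.
  ring.
Qed.

Definition next (r : rect) : rect :=
  let q := Cmod (BdR r) / 4 in
  if Rle_dec q (Cmod (BdR (q1 r))) then q1 r else
  if Rle_dec q (Cmod (BdR (q2 r))) then q2 r else
  if Rle_dec q (Cmod (BdR (q3 r))) then q3 r else q4 r.

Definition geo (r r' : rect) := sub r' /\ ra r <= ra r' /\ rb r' <= rb r /\ rc r <= rc r' /\ rd r' <= rd r /\
  rb r' - ra r' = (rb r - ra r) / 2 /\ rd r' - rc r' = (rd r - rc r) / 2.

Lemma geo_q1 r : sub r -> geo r (q1 r).
Proof. destruct r as [a b c d]. unfold geo, sub, q1; cbn [ra rb rc rd]. intros; repeat split; lra. Qed.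
Lemma geo_q2 r : sub r -> geo r (q2 r).
Proof. destruct r as [a b c d]. unfold geo, sub, q2; cbn [ra rb rc rd]. intros; repeat split; lra. Qed.
Lemma geo_q3 r : sub r -> geo r (q3 r).
Proof. destruct r as [a b c d]. unfold geo, sub, q3; cbn [ra rb rc rd]. intros; repeat split; lra. Qed.
Lemma geo_q4 r : sub r -> geo r (q4 r).
Proof. destruct r as [a b c d]. unfold geo, sub, q4; cbn [ra rb rc rd]. intros; repeat split; lra. Qed.

Lemma next_prop r : sub r -> geo r (next r) /\ Cmod (BdR r) <= 4 * Cmod (BdR (next r)).
Proof.
  intros Hs. assert (E := split4 r Hs).
  unfold next.
  destruct (Rle_dec _ _) as [K1|K1]. split. apply geo_q1, Hs. lra.
  destruct (Rle_dec _ _) as [K2|K2]. split. apply geo_q2, Hs. lra.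
  destruct (Rle_dec _ _) as [K3|K3]. split. apply geo_q3, Hs. lra.
  split. apply geo_q4, Hs.
  set (A := BdR r) in *. set (B1 := BdR (q1 r)) in *. set (B2 := BdR (q2 r)) in *.
  set (B3 := BdR (q3 r)) in *. set (B4 := BdR (q4 r)) in *.
  assert (Cmod A <= Cmod B1 + Cmod B2 + Cmod B3 + Cmod B4).
  { rewrite E. eapply Rle_trans. apply Cmod_triangle.
    eapply Rle_trans. apply Rplus_le_compat_r. apply Cmod_triangle.
    eapply Rle_trans. apply Rplus_le_compat_r. apply Rplus_le_compat_r. apply Cmod_triangle. lra. }
  lra.
Qed.

Definition Rect0 := mkR a0 b0 c0 d0.
Fixpoint rs (n : nat) : rect := match n with O => Rect0 | S k => next (rs k) end.

Lemma rs_prop n : sub (rs n) /\ rb (rs n) - ra (rs n) = (b0 - a0) / 2 ^ n /\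
  rd (rs n) - rc (rs n) = (d0 - c0) / 2 ^ n /\ Cmod (BdR Rect0) <= (2 ^ n * 2 ^ n) * Cmod (BdR (rs n)).
Proof.
  induction n.
  - cbn [rs]. unfold sub, Rect0; cbn [ra rb rc rd]. repeat split; try lra.
  - destruct IHn as (H1 & H2 & H3 & H4). cbn [rs].
    destruct (next_prop _ H1) as ((K1 & K2 & K3 & K4 & K5 & K6 & K7) & K8).
    split; [exact K1|]. split; [|split].
    + rewrite K6, H2. change (2 ^ S n) with (2 * 2 ^ n). field. apply pow_nonzero. lra.
    + rewrite K7, H3. change (2 ^ S n) with (2 * 2 ^ n). field. apply pow_nonzero. lra.
    + eapply Rle_trans. exact H4. 
      assert (0 < 2 ^ n) by (apply pow_lt; lra).
      change (2 ^ S n) with (2 * 2 ^ n).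
      replace (2 * 2 ^ n * (2 * 2 ^ n) * Cmod (BdR (next (rs n)))) with ((2 ^ n * 2 ^ n) * (4 * Cmod (BdR (next (rs n))))) by ring.
      apply Rmult_le_compat_l. nra. exact K8.
Qed.

Lemma rs_mono n k : ra (rs n) <= ra (rs (n + k)) /\ rb (rs (n + k)) <= rb (rs n) /\
  rc (rs n) <= rc (rs (n + k)) /\ rd (rs (n + k)) <= rd (rs n).
Proof.
  induction k.
  - rewrite Nat.add_0_r. lra.
  - rewrite Nat.add_succ_r. cbn [rs].
    destruct (next_prop _ (proj1 (rs_prop (n + k)))) as ((K1 & K2 & K3 & K4 & K5 & _) & _).
    lra.
Qed.

Lemma rs_ab m n : ra (rs m) <= rb (rs n) /\ rc (rs m) <= rd (rs n).
Proof.
  destruct (rs_mono m n) as (A1 & A2 & A3 & A4).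
  destruct (rs_mono n m) as (B1 & B2 & B3 & B4).
  rewrite Nat.add_comm in B1, B2, B3, B4.
  destruct (rs_prop (m + n)) as ((S1 & S2 & S3 & S4 & S5 & S6) & _).
  split; lra.
Qed.

Theorem goursat : Bd h a0 b0 c0 d0 = 0%C.
Proof.
  set (EA := fun x => exists n, x = ra (rs n)).
  set (EC := fun x => exists n, x = rc (rs n)).
  destruct (completeness EA) as [xs [Hxs1 Hxs2]].
  { exists b0. intros x [n ->]. destruct (rs_prop n) as ((S1 & S2 & S3 & _) & _). lra. }
  { exists a0. exists O. reflexivity. }
  destruct (completeness EC) as [ys [Hys1 Hys2]].
  { exists d0. intros x [n ->]. destruct (rs_prop n) as ((S1 & S2 & S3 & S4 & S5 & S6) & _). lra. }
  { exists c0. exists O. reflexivity. }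
  assert (Xin : forall n, ra (rs n) <= xs <= rb (rs n)).
  { intros n. split. apply Hxs1. exists n. reflexivity.
    apply Hxs2. intros x [m ->]. apply rs_ab. }
  assert (Yin : forall n, rc (rs n) <= ys <= rd (rs n)).
  { intros n. split. apply Hys1. exists n. reflexivity.
    apply Hys2. intros x [m ->]. apply rs_ab. }
  set (zs := (xs, ys) : C).
  assert (Zin : inR a0 b0 c0 d0 zs).
  { unfold inR, zs; cbn [fst snd]. destruct (Xin O) as [X1 X2], (Yin O) as [Y1 Y2].
    cbn [rs Rect0 ra rb rc rd] in X1, X2, Y1, Y2. split; lra. }
  destruct (Hdiff zs Zin) as [l Hl].
  apply Cmod_eq_0.
  apply Rle_antisym. 2: apply Cmod_ge_0.
  apply Rnot_lt_le. intros Hpos.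
  set (WH := (b0 - a0) + (d0 - c0)).
  assert (HWH : 0 <= WH) by (unfold WH; lra).
  set (eps := Cmod (Bd h a0 b0 c0 d0) / (4 * (WH * WH + 1))).
  assert (Heps : 0 < eps) by (unfold eps; apply Rdiv_lt_0_compat; nra).
  destruct (Hl eps Heps) as [del [Hdel Hk]].
  destruct (pow2_big WH del Hdel) as [n Hn].
  destruct (rs_prop n) as (Hsub & Hw & Hh & Hb).
  assert (P2 : 0 < 2 ^ n) by (apply pow_lt; lra).
  set (r := rs n) in *.
  set (wn := rb r - ra r + (rd r - rc r)).
  assert (Hwn : wn = WH / 2 ^ n) by (unfold wn, WH; rewrite Hw, Hh; field; lra).
  assert (Hwn_del : wn < del).
  { rewrite Hwn. apply Rmult_lt_reg_r with (2 ^ n). auto. unfold Rdiv. rewrite Rmult_assoc, Rinv_l by lra. lra. }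
  set (g := fun w => (h w + ((- h zs + l * zs) + (- l) * w))%C).
  assert (Hsub' := Hsub). unfold sub in Hsub'.
  assert (BI : BdInt h (ra r) (rb r) (rc r) (rd r)).
  { apply BdInt_of_cont; try lra. intros z [[Hz1 Hz2] _]. apply cont_R0. unfold inR. split; lra. }
  assert (Eg : BdR r = Bd g (ra r) (rb r) (rc r) (rd r)).
  { unfold g, BdR. rewrite (Bd_plus h (fun w => ((- h zs + l * zs) + (- l) * w))%C).
    rewrite Bd_affine. ring. exact BI.
    apply BdInt_plus. apply BdInt_const. apply BdInt_mul, BdInt_id. }
  assert (Bg : Cmod (Bd g (ra r) (rb r) (rc r) (rd r)) <= 2 * wn * (eps * wn)).
  { unfold wn. apply Bd_bound; try lra.
    apply BdInt_plus. exact BI. apply BdInt_plus. apply BdInt_const. apply BdInt_mul, BdInt_id.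
    intros z [[Hz1 Hz2] _].
    assert (Dz : Cmod (z - zs)%C <= wn).
    { eapply Rle_trans. apply Cmod_le_sum. unfold zs, wn. destruct z as [zx zy]; cbn [fst snd] in *.
      destruct (Xin n) as [X1 X2], (Yin n) as [Y1 Y2]. fold r in X1, X2, Y1, Y2.
      simpl. unfold Rabs; destruct Rcase_abs; destruct Rcase_abs; lra. }
    specialize (Hk z (Rle_lt_trans _ _ _ Dz Hwn_del)).
    unfold g. replace (h z + (- h zs + l * zs + - l * z))%C with (h z - h zs - l * (z - zs))%C by ring.
    eapply Rle_trans. exact Hk. apply Rmult_le_compat_l. lra. exact Dz. }
  rewrite Eg in Hb. fold r in Hb.
  assert (Cmod (Bd h a0 b0 c0 d0) <= 2 * eps * WH * WH).
  { change (BdR Rect0) with (Bd h a0 b0 c0 d0) in Hb.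
    eapply Rle_trans. exact Hb.
    apply Rle_trans with (2 ^ n * 2 ^ n * (2 * wn * (eps * wn))).
    apply Rmult_le_compat_l. nra. exact Bg.
    rewrite Hwn. right. field. lra. }
  unfold eps in H. 
  assert (2 * (Cmod (Bd h a0 b0 c0 d0) / (4 * (WH * WH + 1))) * WH * WH < Cmod (Bd h a0 b0 c0 d0)).
  { unfold Rdiv. 
    replace (2 * (Cmod (Bd h a0 b0 c0 d0) * / (4 * (WH * WH + 1))) * WH * WH) with
      (Cmod (Bd h a0 b0 c0 d0) * ((WH * WH) / (2 * (WH * WH + 1)))) by (field; nra).
    assert (WH * WH / (2 * (WH * WH + 1)) < 1).
    { apply Rmult_lt_reg_r with (2 * (WH * WH + 1)). nra. unfold Rdiv. rewrite Rmult_assoc, Rinv_l by nra. nra. }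
    nra. }
  lra.
Qed.

End Goursat.

Lemma neq_fst (w z : C) : fst w <> fst z -> w <> z.
Proof. intros H E. apply H. rewrite E. reflexivity. Qed.
Lemma neq_snd (w z : C) : snd w <> snd z -> w <> z.
Proof. intros H E. apply H. rewrite E. reflexivity. Qed.

Section Exc.
Variable h : C -> C.
Variables a b c d : R.
Variable z : C.
Variable e : R.
Hypothesis He : 0 < e.
Hypothesis Ha : a < fst z - e.
Hypothesis Hb : fst z + e < b.
Hypothesis Hc : c < snd z - e.
Hypothesis Hd : snd z + e < d.
Hypothesis Hdiff : forall w, inR a b c d w -> w <> z -> exists l, Cdiff h w l.

Lemma ccont_exc w : inR a b c d w -> w <> z -> Ccont h w.
Proof. intros H1 H2. destruct (Hdiff w H1 H2) as [l Hl]. exact (Ccont_of_Cdiff _ _ _ Hl). Qed.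

Lemma exh' (y a' b' : R) : c <= y <= d -> (y < snd z \/ snd z < y) -> a <= a' -> a' <= b' -> b' <= b ->
  CexInt (fun t => h (t, y)) a' b'.
Proof.
  intros Hy Hyz H1 H2 H3. apply CexInt_h. auto. intros t Ht. apply ccont_exc.
  unfold inR; simpl. split; lra. apply neq_snd. simpl. lra.
Qed.
Lemma exv' (x c' d' : R) : a <= x <= b -> (x < fst z \/ fst z < x) -> c <= c' -> c' <= d' -> d' <= d ->
  CexInt (fun t => h (x, t)) c' d'.
Proof.
  intros Hy Hyz H1 H2 H3. apply CexInt_v. auto. intros t Ht. apply ccont_exc.
  unfold inR; simpl. split; lra. apply neq_fst. simpl. lra.
Qed.

Ltac exhv' := match goal with
  | |- CexInt (fun t => h (t, _)) _ _ => apply exh'; [lra | first [left; lra | right; lra] | lra | lra | lra]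
  | |- CexInt (fun t => h (_, t)) _ _ => apply exv'; [lra | first [left; lra | right; lra] | lra | lra | lra] end.

Lemma gours_piece a' b' c' d' : a <= a' -> a' <= b' -> b' <= b -> c <= c' -> c' <= d' -> d' <= d ->
  (b' < fst z \/ fst z < a' \/ d' < snd z \/ snd z < c') -> Bd h a' b' c' d' = 0%C.
Proof.
  intros H1 H2 H3 H4 H5 H6 H7. apply goursat; auto.
  intros w [Hw1 Hw2]. apply Hdiff. unfold inR. split; lra.
  intro E. rewrite E in Hw1, Hw2. lra.
Qed.

Theorem bd_exc : Bd h a b c d = Bd h (fst z - e) (fst z + e) (snd z - e) (snd z + e).
Proof.
  set (x1 := fst z - e). set (x2 := fst z + e). set (y1 := snd z - e). set (y2 := snd z + e).
  assert (Hx1 : x1 < fst z) by (unfold x1; lra). assert (Hx2 : fst z < x2) by (unfold x2; lra).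
  assert (Hy1 : y1 < snd z) by (unfold y1; lra). assert (Hy2 : snd z < y2) by (unfold y2; lra).
  assert (a < x1) by (unfold x1; lra). assert (x2 < b) by (unfold x2; lra).
  assert (c < y1) by (unfold y1; lra). assert (y2 < d) by (unfold y2; lra).
  clearbody x1 x2 y1 y2.
  rewrite (Bd_cutV h a x1 b c d).
  2-5: exhv'.
  rewrite (Bd_cutV h x1 x2 b c d).
  2-5: exhv'.
  rewrite (Bd_cutH h x1 x2 c y1 d).
  2-5: exhv'.
  rewrite (Bd_cutH h x1 x2 y1 y2 d).
  2-5: exhv'.
  rewrite (gours_piece a x1 c d), (gours_piece x2 b c d), (gours_piece x1 x2 c y1), (gours_piece x1 x2 y2 d).
  all: try lra.
  ring.
Qed.
End Exc.

Lemma CInt_shift (phi : R -> C) (a b v : R) : CexInt phi (a + v) (b + v) ->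
  CInt phi (a + v) (b + v) = CInt (fun y => phi (y + v)) a b.
Proof.
  intros H. unfold CInt.
  assert (E := @RInt_comp_lin C_R_CompleteNormedModule phi 1 v a b).
  rewrite !Rmult_1_l in E. rewrite <- E by exact H.
  apply (@RInt_ext C_R_CompleteNormedModule). intros t _. rewrite Rmult_1_l. exact (scal_one _).
Qed.

Lemma Bd_shift (h k : C -> C) (v : C) (a b c d : R) :
  BdInt h (a + fst v) (b + fst v) (c + snd v) (d + snd v) ->
  (forall w, h (w + v)%C = k w) ->
  Bd h (a + fst v) (b + fst v) (c + snd v) (d + snd v) = Bd k a b c d.
Proof.
  intros (A1 & A2 & A3 & A4) Hk. destruct v as [v1 v2]. cbn [fst snd] in *.
  unfold Bd, HI, VI.
  rewrite (CInt_shift _ a b v1 A1), (CInt_shift _ a b v1 A2), (CInt_shift _ c d v2 A3), (CInt_shift _ c d v2 A4).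
  rewrite (CInt_ext (fun y => h (y + v1, c + v2)) (fun t => k (t, c)) a b),
    (CInt_ext (fun y => h (y + v1, d + v2)) (fun t => k (t, d)) a b),
    (CInt_ext (fun y => h (a + v1, y + v2)) (fun t => k (a, t)) c d),
    (CInt_ext (fun y => h (b + v1, y + v2)) (fun t => k (b, t)) c d). reflexivity.
  all: intros t _; rewrite <- Hk; f_equal; unfold Cplus; simpl; reflexivity.
Qed.

Lemma CInt_fst phi a b : CexInt phi a b -> fst (CInt phi a b) = RInt (fun t => fst (phi t)) a b.
Proof.
  intros H. symmetry. apply is_RInt_unique.
  exact (@is_RInt_fct_extend_fst R_NormedModule R_NormedModule phi a b _ (CInt_correct _ _ _ H)).
Qed.

Lemma snd_bd_formula (A B C' D' : C) : snd (A + Ci * B - C' - Ci * D')%C = snd A + fst B - snd C' - fst D'.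
Proof. destruct A, B, C', D'. unfold Ci, Cminus, Cplus, Copp, Cmult; simpl. ring. Qed.

Lemma Ccont_inv (w : C) : w <> 0%C -> Ccont (fun u => / u)%C w.
Proof.
  intros Hw. assert (D := Cdiff_invshift 0 w).
  assert (w <> 0%C) by auto. specialize (D H).
  apply Ccont_of_Cdiff in D. intros eps Heps. destruct (D eps Heps) as [del [Hd K]].
  exists del. split. auto. intros u Hu. specialize (K u Hu).
  replace (u - 0)%C with u in K by ring. replace (w - 0)%C with w in K by ring. exact K.
Qed.

Lemma RInt_Ropp (g : R -> R) a b : ex_RInt g a b -> RInt (fun t => - g t) a b = - RInt g a b.
Proof.
  intros H. apply is_RInt_unique.
  exact (is_RInt_opp g a b _ (RInt_correct g a b H)).
Qed.

Section K0.
Variable e : R.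
Hypothesis He : 0 < e.

Definition K0 := Bd (fun w => / w)%C (- e) e (- e) e.

Lemma BdInt_inv : BdInt (fun w => / w)%C (- e) e (- e) e.
Proof.
  apply BdInt_of_cont; try lra. intros w [[H1 H2] H3]. apply Ccont_inv.
  intro E. rewrite E in H3. simpl in H3. lra.
Qed.

Definition gP (t : R) := e / (t ^ 2 + e ^ 2).

Lemma gP_cont t : continuous gP t.
Proof.
  apply (@ex_derive_continuous R_AbsRing R_NormedModule). unfold gP. auto_derive.
  assert (0 < e ^ 2) by (apply pow_lt; lra). assert (0 <= t ^ 2) by (apply pow2_ge_0). lra.
Qed.

Lemma gP_pos : 0 < RInt gP (- e) e.
Proof.
  apply RInt_gt_0. lra. intros x _. unfold gP. apply Rdiv_lt_0_compat. lra.
  assert (0 < e ^ 2) by (apply pow_lt; lra). assert (0 <= x ^ 2) by (apply pow2_ge_0). lra.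
  intros x _. apply gP_cont.
Qed.

Lemma gP_ex : ex_RInt gP (- e) e.
Proof. apply (@ex_RInt_continuous R_CompleteNormedModule). intros x _. apply gP_cont. Qed.

Lemma K0_im : 0 < snd K0.
Proof.
  destruct BdInt_inv as (A1 & A2 & A3 & A4).
  unfold K0, Bd, HI, VI. rewrite snd_bd_formula.
  rewrite (CInt_snd _ _ _ A1), (CInt_snd _ _ _ A2), (CInt_fst _ _ _ A3), (CInt_fst _ _ _ A4).
  rewrite (RInt_ext (fun t => snd (Cinv (t, Ropp e))) gP).
  rewrite (RInt_ext (fun t => snd (Cinv (t, e))) (fun t => - gP t)).
  rewrite (RInt_ext (fun t => fst (Cinv (Ropp e, t))) (fun t => - gP t)).
  rewrite (RInt_ext (fun t => fst (Cinv (e, t))) gP).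
  rewrite !RInt_Ropp by apply gP_ex.
  generalize gP_pos. lra.
  all: intros t _; unfold Cinv, gP; simpl; field.
  all: assert (0 < e ^ 2) by (apply pow_lt; lra); assert (0 <= t ^ 2) by (apply pow2_ge_0); nra.
Qed.

Lemma K0_nz : K0 <> 0%C.
Proof. intro E. generalize K0_im. rewrite E. simpl. lra. Qed.
End K0.

Lemma fst_minus (a b : C) : fst (a - b)%C = fst a - fst b.
Proof. destruct a, b. simpl. ring. Qed.
Lemma snd_minus (a b : C) : snd (a - b)%C = snd a - snd b.
Proof. destruct a, b. simpl. ring. Qed.

Lemma onBd_far (z w : C) (e : R) : 0 < e ->
  onBd (fst z - e) (fst z + e) (snd z - e) (snd z + e) w ->
  e <= Cmod (w - z)%C /\ Cmod (w - z)%C <= 2 * e.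
Proof.
  intros He [[H1 H2] H3]. split.
  - generalize (Cmod_fst (w - z)%C) (Cmod_snd (w - z)%C). rewrite fst_minus, snd_minus.
    intros. destruct H3 as [E|[E|[E|E]]]; rewrite E in *.
    + replace (fst z - e - fst z) with (- e) in H by ring. rewrite Rabs_Ropp, Rabs_right in H; lra.
    + replace (fst z + e - fst z) with e in H by ring. rewrite Rabs_right in H; lra.
    + replace (snd z - e - snd z) with (- e) in H0 by ring. rewrite Rabs_Ropp, Rabs_right in H0; lra.
    + replace (snd z + e - snd z) with e in H0 by ring. rewrite Rabs_right in H0; lra.
  - eapply Rle_trans. apply Cmod_le_sum. rewrite fst_minus, snd_minus.
    unfold Rabs; destruct Rcase_abs; destruct Rcase_abs; lra.
Qed.

Section Cauchy.
Variable f : C -> C.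
Variables x0 y0 s : R.
Hypothesis Hs : 0 < s.
Hypothesis Hf : forall w, inR (x0 - s) (x0 + s) (y0 - s) (y0 + s) w -> exists l, Cdiff f w l.

Definition Kc := K0 (s / 4).
Definition inner (z : C) := Rabs (fst z - x0) <= s / 4 /\ Rabs (snd z - y0) <= s / 4.

Lemma inner_in z : inner z -> inR (x0 - s) (x0 + s) (y0 - s) (y0 + s) z.
Proof.
  intros [H1 H2]. unfold inR. apply Rabs_le_between' in H1. apply Rabs_le_between' in H2. split; lra.
Qed.

Section Z.
Variable z : C.
Hypothesis Hz : inner z.

Let hI := fun w => (/ (w - z))%C.
Let hF := fun w => (f w * / (w - z))%C.

Lemma hI_diff w : w <> z -> exists l, Cdiff hI w l.
Proof. intros H. eexists. apply Cdiff_invshift. exact H. Qed.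
Lemma hF_diff w : inR (x0 - s) (x0 + s) (y0 - s) (y0 + s) w -> w <> z -> exists l, Cdiff hF w l.
Proof.
  intros H1 H2. destruct (Hf w H1) as [l Hl]. eexists. apply Cdiff_mult. exact Hl. apply Cdiff_invshift. exact H2.
Qed.

Lemma zbox : x0 - s < fst z - s / 4 /\ fst z + s / 4 < x0 + s /\ y0 - s < snd z - s / 4 /\ snd z + s / 4 < y0 + s.
Proof. destruct Hz as [H1 H2]. apply Rabs_le_between' in H1. apply Rabs_le_between' in H2. repeat split; lra. Qed.

Lemma small_in e w : 0 < e -> e <= s / 4 -> inR (fst z - e) (fst z + e) (snd z - e) (snd z + e) w ->
  inR (x0 - s) (x0 + s) (y0 - s) (y0 + s) w.
Proof. intros H1 H2 [[A1 A2] [B1 B2]]. destruct zbox as (Z1 & Z2 & Z3 & Z4). unfold inR. split; split; lra. Qed.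

Lemma exc_I e : 0 < e -> e <= s / 4 ->
  Bd hI (x0 - s) (x0 + s) (y0 - s) (y0 + s) = Bd hI (fst z - e) (fst z + e) (snd z - e) (snd z + e).
Proof.
  intros He1 He2. destruct zbox as (Z1 & Z2 & Z3 & Z4).
  apply bd_exc; try lra. intros w _ Hw. apply hI_diff, Hw.
Qed.
Lemma exc_F e : 0 < e -> e <= s / 4 ->
  Bd hF (x0 - s) (x0 + s) (y0 - s) (y0 + s) = Bd hF (fst z - e) (fst z + e) (snd z - e) (snd z + e).
Proof.
  intros He1 He2. destruct zbox as (Z1 & Z2 & Z3 & Z4).
  apply bd_exc; try lra. intros w Hw1 Hw2. apply hF_diff; assumption.
Qed.

Lemma BdInt_small (g : C -> C) e : 0 < e -> e <= s / 4 ->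
  (forall w, inR (x0 - s) (x0 + s) (y0 - s) (y0 + s) w -> w <> z -> exists l, Cdiff g w l) ->
  BdInt g (fst z - e) (fst z + e) (snd z - e) (snd z + e).
Proof.
  intros He1 He2 Hg. apply BdInt_of_cont; try lra. intros w Hw.
  destruct (onBd_far z w e He1 Hw) as [K1 _].
  destruct (Hg w) as [l Hl]. apply (small_in e); auto. apply Hw.
  intro E. rewrite E in K1. replace (z - z)%C with (RtoC 0) in K1 by ring. rewrite Cmod_0 in K1. lra.
  exact (Ccont_of_Cdiff _ _ _ Hl).
Qed.

Lemma hI_val : Bd hI (x0 - s) (x0 + s) (y0 - s) (y0 + s) = Kc.
Proof.
  assert (He : 0 < s / 4) by lra.
  rewrite (exc_I (s / 4)) by lra.
  unfold Kc, K0.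
  replace (fst z - s / 4) with (- (s / 4) + fst z) by ring.
  replace (fst z + s / 4) with (s / 4 + fst z) by ring.
  replace (snd z - s / 4) with (- (s / 4) + snd z) by ring.
  replace (snd z + s / 4) with (s / 4 + snd z) by ring.
  apply Bd_shift.
  - replace (- (s / 4) + fst z) with (fst z - s / 4) by ring.
    replace (s / 4 + fst z) with (fst z + s / 4) by ring.
    replace (- (s / 4) + snd z) with (snd z - s / 4) by ring.
    replace (s / 4 + snd z) with (snd z + s / 4) by ring.
    apply BdInt_small; try lra. intros w _ Hw. apply hI_diff, Hw.
  - intros w. unfold hI. f_equal. ring.
Qed.

Theorem cauchy_formula : (f z * Kc)%C = Bd hF (x0 - s) (x0 + s) (y0 - s) (y0 + s).
Proof.
  rewrite <- hI_val.
  set (D := (Bd hF (x0 - s) (x0 + s) (y0 - s) (y0 + s) - f z * Bd hI (x0 - s) (x0 + s) (y0 - s) (y0 + s))%C).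
  cut (D = 0%C). { unfold D. intros E. apply Ceq_minus in E. rewrite E. reflexivity. }
  destruct (Hf z (inner_in z Hz)) as [l Hl].
  destruct (Hl 1 Rlt_0_1) as [del [Hdel Kd]].
  assert (HD : forall e, 0 < e -> e <= s / 4 -> 2 * e < del -> Cmod D <= 2 * (2 * e + 2 * e) * (Cmod l + 1)).
  { intros e He1 He2 He3.
    assert (E : D = Bd (fun w => (f w - f z) * / (w - z))%C (fst z - e) (fst z + e) (snd z - e) (snd z + e)).
    { unfold D. rewrite (exc_I e), (exc_F e) by lra.
      rewrite <- Bd_mul. 2: apply BdInt_small; auto; intros w _ Hw; apply hI_diff, Hw.
      replace (Bd hF (fst z - e) (fst z + e) (snd z - e) (snd z + e) -
        Bd (fun w => f z * hI w)%C (fst z - e) (fst z + e) (snd z - e) (snd z + e))%C with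
        (Bd hF (fst z - e) (fst z + e) (snd z - e) (snd z + e) +
        Bd (fun w => (- f z) * hI w)%C (fst z - e) (fst z + e) (snd z - e) (snd z + e))%C.
      2: { rewrite !Bd_mul. ring. all: apply BdInt_small; auto; intros w _ Hw; apply hI_diff, Hw. }
      rewrite <- Bd_plus.
      2: apply BdInt_small; auto; intros w Hw1 Hw2; apply hF_diff; auto.
      2: apply BdInt_mul, BdInt_small; auto; intros w _ Hw; apply hI_diff, Hw.
      apply Bd_ext; try lra. intros w _. unfold hF, hI. ring. }
    rewrite E.
    replace (2 * (2 * e + 2 * e)) with (2 * ((fst z + e - (fst z - e)) + (snd z + e - (snd z - e)))) by ring.
    apply Bd_bound; try lra.
    - apply BdInt_small; auto. intros w Hw1 Hw2. destruct (Hf w Hw1) as [l' Hl']. eexists. apply Cdiff_mult.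
      apply (Cdiff_plus f (fun _ => - f z)%C). exact Hl'. apply Cdiff_const.
      apply Cdiff_invshift. exact Hw2.
    - intros w Hw. destruct (onBd_far z w e He1 Hw) as [K1 K2].
      assert (Hwz : w <> z).
      { intro E'. rewrite E' in K1. replace (z - z)%C with (RtoC 0) in K1 by ring. rewrite Cmod_0 in K1. lra. }
      assert (Pw : 0 < Cmod (w - z)%C) by lra.
      specialize (Kd w ltac:(lra)).
      rewrite Cmod_mult, Cmod_inv.
      2: { intro E'. apply Hwz. apply Ceq_minus. exact E'. }
      assert (Cmod (f w - f z)%C <= (Cmod l + 1) * Cmod (w - z)%C).
      { replace (f w - f z)%C with ((f w - f z - l * (w - z)) + l * (w - z))%C by ring.
        eapply Rle_trans. apply Cmod_triangle. rewrite Cmod_mult. lra. }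
      apply Rmult_le_reg_r with (Cmod (w - z)%C). exact Pw.
      rewrite Rmult_assoc, Rinv_l by lra. lra. }
  apply Cmod_eq_0. apply Rle_antisym. 2: apply Cmod_ge_0.
  apply Rnot_lt_le. intros Hpos.
  generalize (Cmod_ge_0 l). intros Pl.
  set (e := Rmin (Rmin (s / 4) (del / 4)) (Cmod D / (16 * (Cmod l + 1)))).
  assert (He : 0 < e). { unfold e. repeat apply Rmin_pos; try lra. apply Rdiv_lt_0_compat; lra. }
  assert (He1 : e <= s / 4) by (unfold e; eapply Rle_trans; apply Rmin_l).
  assert (He2 : e <= del / 4) by (unfold e; eapply Rle_trans; [apply Rmin_l| apply Rmin_r]).
  assert (He3 : e <= Cmod D / (16 * (Cmod l + 1))) by (unfold e; apply Rmin_r).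
  specialize (HD e He He1 ltac:(lra)).
  assert (e * (16 * (Cmod l + 1)) <= Cmod D).
  { apply Rmult_le_reg_r with (/ (16 * (Cmod l + 1))). apply Rinv_0_lt_compat; lra.
    rewrite Rmult_assoc, Rinv_r by lra. rewrite Rmult_1_r. exact He3. }
  nra.
Qed.
End Z.
End Cauchy.

Lemma Bd_comb2 h1 h2 (k : C) a b c d : BdInt h1 a b c d -> BdInt h2 a b c d ->
  Bd (fun w => h1 w + k * h2 w)%C a b c d = (Bd h1 a b c d + k * Bd h2 a b c d)%C.
Proof.
  intros H1 H2. rewrite (Bd_plus h1 (fun w => k * h2 w)%C). rewrite Bd_mul. reflexivity.
  exact H2. exact H1. apply BdInt_mul, H2.
Qed.

Lemma Bd_comb3 h1 h2 h3 (k2 k3 : C) a b c d : BdInt h1 a b c d -> BdInt h2 a b c d -> BdInt h3 a b c d ->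
  Bd (fun w => h1 w + k2 * h2 w + k3 * h3 w)%C a b c d =
  (Bd h1 a b c d + k2 * Bd h2 a b c d + k3 * Bd h3 a b c d)%C.
Proof.
  intros H1 H2 H3. rewrite (Bd_plus (fun w => h1 w + k2 * h2 w)%C (fun w => k3 * h3 w)%C).
  rewrite Bd_comb2, Bd_mul. reflexivity. all: auto.
  apply BdInt_plus. auto. apply BdInt_mul, H2. apply BdInt_mul, H3.
Qed.

Lemma Cminus_nz (a b : C) : a <> b -> (a - b)%C <> 0%C.
Proof. intros H E. apply H. apply Ceq_minus. exact E. Qed.

Lemma mle a b A B : (0 <= a /\ a <= A) -> (0 <= b /\ b <= B) -> (0 <= a * b /\ a * b <= A * B).
Proof. intros [H1 H2] [H3 H4]. split. apply Rmult_le_pos; auto. apply Rmult_le_compat; auto. Qed.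

Ltac mle_solve := match goal with
  | |- 0 <= _ * _ /\ _ <= _ * _ => apply mle; mle_solve
  | |- _ => split; [apply Cmod_ge_0 | first [assumption | lra]] end.
Ltac mle_go := match goal with |- ?x <= ?y => cut (0 <= x /\ x <= y); [tauto | mle_solve] end.

Section Est.
Variable f : C -> C.
Variables x0 y0 s Mf : R.
Hypothesis Hs : 0 < s.
Hypothesis Hf : forall w, inR (x0 - s) (x0 + s) (y0 - s) (y0 + s) w -> exists l, Cdiff f w l.
Hypothesis HM : forall w, inR (x0 - s) (x0 + s) (y0 - s) (y0 + s) w -> Cmod (f w) <= Mf.

Notation Q h := (Bd h (x0 - s) (x0 + s) (y0 - s) (y0 + s)).
Let K := Kc s.
Lemma K_nz : K <> 0%C.
Proof. apply K0_nz. lra. Qed.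
Lemma K_pos : 0 < Cmod K.
Proof. apply Cmod_gt_0, K_nz. Qed.

Lemma Mf_pos : 0 <= Mf.
Proof.
  eapply Rle_trans. apply Cmod_ge_0. apply (HM (x0, y0)). unfold inR; simpl; split; lra.
Qed.

Lemma far z w : inner x0 y0 s z -> onBd (x0 - s) (x0 + s) (y0 - s) (y0 + s) w ->
  s / 2 <= Cmod (w - z)%C /\ Cmod (w - z)%C <= 3 * s.
Proof.
  intros [Z1 Z2] [[[W1 W2] [W3 W4]] W]. apply Rabs_le_between' in Z1. apply Rabs_le_between' in Z2.
  split.
  - generalize (Cmod_fst (w - z)%C) (Cmod_snd (w - z)%C). rewrite fst_minus, snd_minus. intros A B.
    destruct W as [E|[E|[E|E]]]; rewrite E in *;
    unfold Rabs in A, B; destruct Rcase_abs in A; destruct Rcase_abs in B; lra.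
  - eapply Rle_trans. apply Cmod_le_sum. rewrite fst_minus, snd_minus.
    unfold Rabs; destruct Rcase_abs; destruct Rcase_abs; lra.
Qed.

Lemma far_nz z w : inner x0 y0 s z -> onBd (x0 - s) (x0 + s) (y0 - s) (y0 + s) w -> w <> z.
Proof.
  intros H1 H2 E. destruct (far z w H1 H2) as [A _]. rewrite E in A.
  replace (z - z)%C with (RtoC 0) in A by ring. rewrite Cmod_0 in A. lra.
Qed.

Lemma inv_bound z w : inner x0 y0 s z -> onBd (x0 - s) (x0 + s) (y0 - s) (y0 + s) w ->
  Cmod (/ (w - z))%C <= 2 / s.
Proof.
  intros H1 H2. destruct (far z w H1 H2) as [A _].
  rewrite Cmod_inv by (apply Cminus_nz, (far_nz z w H1 H2)).
  apply Rmult_le_reg_l with (Cmod (w - z)%C). lra.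
  rewrite Rinv_r by lra. apply Rmult_le_reg_r with (s / 2). lra.
  replace (Cmod (w - z)%C * (2 / s) * (s / 2)) with (Cmod (w - z)%C) by (field; lra). lra.
Qed.

Definition hF z := fun w => (f w * / (w - z))%C.
Definition hJ z := fun w => (f w * / (w - z) * / (w - z))%C.

Lemma BdInt_F z : inner x0 y0 s z -> BdInt (hF z) (x0 - s) (x0 + s) (y0 - s) (y0 + s).
Proof.
  intros Hz. apply BdInt_of_cont; try lra. intros w Hw.
  destruct (Hf w (proj1 Hw)) as [l Hl].
  eapply Ccont_of_Cdiff. apply Cdiff_mult. exact Hl. apply Cdiff_invshift. exact (far_nz z w Hz Hw).
Qed.
Lemma BdInt_J z : inner x0 y0 s z -> BdInt (hJ z) (x0 - s) (x0 + s) (y0 - s) (y0 + s).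
Proof.
  intros Hz. apply BdInt_of_cont; try lra. intros w Hw.
  destruct (Hf w (proj1 Hw)) as [l Hl].
  eapply Ccont_of_Cdiff. apply Cdiff_mult. apply Cdiff_mult. exact Hl.
  apply Cdiff_invshift. exact (far_nz z w Hz Hw). apply Cdiff_invshift. exact (far_nz z w Hz Hw).
Qed.

Lemma bdQ_bound (psi : C -> C) M : BdInt psi (x0 - s) (x0 + s) (y0 - s) (y0 + s) ->
  (forall w, onBd (x0 - s) (x0 + s) (y0 - s) (y0 + s) w -> Cmod (psi w) <= M) ->
  Cmod (Q psi) <= 8 * s * M.
Proof.
  intros H1 H2. replace (8 * s) with (2 * ((x0 + s - (x0 - s)) + (y0 + s - (y0 - s)))) by ring.
  apply Bd_bound; auto; lra.
Qed.

Lemma f_repr z : inner x0 y0 s z -> f z = (Q (hF z) * / K)%C.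
Proof.
  intros Hz. assert (E := cauchy_formula f x0 y0 s Hs Hf z Hz). unfold hF. rewrite <- E. fold K. field. apply K_nz.
Qed.

Definition G z := (Q (hJ z) * / K)%C.

Lemma Cmod_divK x : Cmod (x * / K)%C = Cmod x / Cmod K.
Proof. rewrite Cmod_mult, Cmod_inv by apply K_nz. reflexivity. Qed.

Lemma est_lip z z' : inner x0 y0 s z -> inner x0 y0 s z' ->
  Cmod (f z' - f z)%C <= (32 * Mf / (s * Cmod K)) * Cmod (z' - z)%C.
Proof.
  intros Hz Hz'. rewrite (f_repr z Hz), (f_repr z' Hz').
  replace (Q (hF z') * / K - Q (hF z) * / K)%C with ((Q (hF z') + (- 1) * Q (hF z)) * / K)%C by ring.
  rewrite <- Bd_comb2 by (apply BdInt_F; auto).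
  rewrite (Bd_ext _ (fun w => f w * (z' - z) * / (w - z) * / (w - z'))%C); try lra.
  2: { intros w Hw. unfold hF. field. split; apply Cminus_nz; eapply far_nz; eauto. }
  rewrite Cmod_divK. generalize K_pos Mf_pos (Cmod_ge_0 (z' - z)%C). intros PK PM Pz.
  apply Rmult_le_reg_r with (Cmod K). auto. unfold Rdiv. rewrite Rmult_assoc, Rinv_l by lra. rewrite Rmult_1_r.
  eapply Rle_trans. apply bdQ_bound with (M := Mf * Cmod (z' - z)%C * (2 / s) * (2 / s)).
  - apply BdInt_ext with (fun w => hF z' w + (-1) * hF z w)%C; try lra.
    intros w Hw. unfold hF. field. split; apply Cminus_nz; eapply far_nz; eauto.
    apply BdInt_plus. apply BdInt_F; auto. apply BdInt_mul, BdInt_F; auto.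
  - intros w Hw. rewrite !Cmod_mult.
    assert (A1 := inv_bound z w Hz Hw). assert (A2 := inv_bound z' w Hz' Hw).
    assert (A3 := HM w (proj1 Hw)).
    mle_go.
  - right. field. split; lra.
Qed.

Lemma est_taylor z z' : inner x0 y0 s z -> inner x0 y0 s z' ->
  Cmod (f z' - f z - G z * (z' - z))%C <= (64 * Mf / (s * s * Cmod K)) * (Cmod (z' - z)%C * Cmod (z' - z)%C).
Proof.
  intros Hz Hz'. rewrite (f_repr z Hz), (f_repr z' Hz'). unfold G.
  replace (Q (hF z') * / K - Q (hF z) * / K - Q (hJ z) * / K * (z' - z))%C with
    ((Q (hF z') + (- 1) * Q (hF z) + (- (z' - z)) * Q (hJ z)) * / K)%C by ring.
  rewrite <- (Bd_comb3 (hF z') (hF z) (hJ z) (-1) (- (z' - z)));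
    [| apply BdInt_F; auto | apply BdInt_F; auto | apply BdInt_J; auto].
  rewrite (Bd_ext _ (fun w => f w * (z' - z) * (z' - z) * / (w - z) * / (w - z) * / (w - z'))%C); try lra.
  2: { intros w Hw. unfold hF, hJ. field. split; apply Cminus_nz; eapply far_nz; eauto. }
  rewrite Cmod_divK. generalize K_pos Mf_pos (Cmod_ge_0 (z' - z)%C). intros PK PM Pz.
  apply Rmult_le_reg_r with (Cmod K). auto. unfold Rdiv. rewrite Rmult_assoc, Rinv_l by lra. rewrite Rmult_1_r.
  eapply Rle_trans. apply bdQ_bound with
    (M := Mf * Cmod (z' - z)%C * Cmod (z' - z)%C * (2 / s) * (2 / s) * (2 / s)).
  - apply BdInt_ext with (fun w => hF z' w + (-1) * hF z w + (- (z' - z)) * hJ z w)%C; try lra.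
    intros w Hw. unfold hF, hJ. field. split; apply Cminus_nz; eapply far_nz; eauto.
    apply BdInt_plus. apply BdInt_plus. apply BdInt_F; auto. apply BdInt_mul, BdInt_F; auto.
    apply BdInt_mul, BdInt_J; auto.
  - intros w Hw. rewrite !Cmod_mult.
    assert (A1 := inv_bound z w Hz Hw). assert (A2 := inv_bound z' w Hz' Hw).
    assert (A3 := HM w (proj1 Hw)). mle_go.
  - right. field. split; lra.
Qed.

Lemma est_G_bound z : inner x0 y0 s z -> Cmod (G z) <= 32 * Mf / (s * Cmod K).
Proof.
  intros Hz. unfold G. rewrite Cmod_divK. generalize K_pos Mf_pos. intros PK PM.
  apply Rmult_le_reg_r with (Cmod K). auto. unfold Rdiv. rewrite Rmult_assoc, Rinv_l by lra. rewrite Rmult_1_r.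
  eapply Rle_trans. apply bdQ_bound with (M := Mf * (2 / s) * (2 / s)).
  - apply BdInt_J; auto.
  - intros w Hw. unfold hJ. rewrite !Cmod_mult.
    assert (A1 := inv_bound z w Hz Hw). assert (A3 := HM w (proj1 Hw)). mle_go.
  - right. field. split; lra.
Qed.

Lemma est_G_lip z z' : inner x0 y0 s z -> inner x0 y0 s z' ->
  Cmod (G z' - G z)%C <= (768 * Mf / (s * s * Cmod K)) * Cmod (z' - z)%C.
Proof.
  intros Hz Hz'. unfold G.
  replace (Q (hJ z') * / K - Q (hJ z) * / K)%C with ((Q (hJ z') + (- 1) * Q (hJ z)) * / K)%C by ring.
  rewrite <- (Bd_comb2 (hJ z') (hJ z) (-1)) by (apply BdInt_J; auto).
  rewrite (Bd_ext _ (fun w => f w * (z' - z) * ((w - z) + (w - z')) * / (w - z) * / (w - z) * / (w - z') * / (w - z'))%C); try lra.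
  2: { intros w Hw. unfold hJ. field. split; apply Cminus_nz; eapply far_nz; eauto. }
  rewrite Cmod_divK. generalize K_pos Mf_pos (Cmod_ge_0 (z' - z)%C). intros PK PM Pz.
  apply Rmult_le_reg_r with (Cmod K). auto. unfold Rdiv. rewrite Rmult_assoc, Rinv_l by lra. rewrite Rmult_1_r.
  eapply Rle_trans. apply bdQ_bound with
    (M := Mf * Cmod (z' - z)%C * (6 * s) * (2 / s) * (2 / s) * (2 / s) * (2 / s)).
  - apply BdInt_ext with (fun w => hJ z' w + (-1) * hJ z w)%C; try lra.
    intros w Hw. unfold hJ. field. split; apply Cminus_nz; eapply far_nz; eauto.
    apply BdInt_plus. apply BdInt_J; auto. apply BdInt_mul, BdInt_J; auto.
  - intros w Hw. rewrite !Cmod_mult.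
    assert (A1 := inv_bound z w Hz Hw). assert (A2 := inv_bound z' w Hz' Hw).
    assert (A3 := HM w (proj1 Hw)).
    assert (A4 : Cmod ((w - z) + (w - z'))%C <= 6 * s).
    { eapply Rle_trans. apply Cmod_triangle. destruct (far z w Hz Hw), (far z' w Hz' Hw). lra. }
    mle_go.
  - right. field. split; lra.
Qed.
End Est.

Lemma core (U : C -> Prop) (f : C -> C) (y0 : R)
  (hU : open U) (hf : Hol_upper U f) (hy0 : U (RtoC y0)) :
  exists rho G L, 0 < rho /\ 0 < L /\ forall z z',
    Cmod (z - RtoC y0)%C < rho -> Cmod (z' - RtoC y0)%C < rho ->
    U z /\ Cmod (f z' - f z)%C <= L * Cmod (z' - z)%C /\
    Cmod (f z' - f z - G z * (z' - z))%C <= L * (Cmod (z' - z)%C * Cmod (z' - z)%C) /\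
    Cmod (G z) <= L /\ Cmod (G z' - G z)%C <= L * Cmod (z' - z)%C.
Proof.
  destruct hf as [hd hup].
  destruct (hU _ hy0) as [eps Heps].
  destruct (Cdiff_of_ex_derive f _ (hd _ hy0)) as [l0 Hl0].
  destruct (Ccont_of_Cdiff _ _ _ Hl0 1 Rlt_0_1) as [d1 [Hd1 K1]].
  set (s := Rmin eps d1 / 4).
  assert (Hs : 0 < s) by (unfold s; generalize (cond_pos eps); intros; apply Rdiv_lt_0_compat; [apply Rmin_pos|]; lra).
  assert (Hs1 : 4 * s <= eps) by (unfold s; generalize (Rmin_l eps d1); lra).
  assert (Hs2 : 4 * s <= d1) by (unfold s; generalize (Rmin_r eps d1); lra).
  assert (QU : forall w, inR (y0 - s) (y0 + s) (0 - s) (0 + s) w -> U w).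
  { intros w [[W1 W2] [W3 W4]]. apply Heps. split; simpl; unfold AbsRing_ball, abs, minus, plus, opp; simpl.
    all: unfold ball; simpl; unfold AbsRing_ball, abs, minus, plus, opp; simpl.
    all: unfold Rabs; destruct Rcase_abs; lra. }
  assert (Hf : forall w, inR (y0 - s) (y0 + s) (0 - s) (0 + s) w -> exists l, Cdiff f w l).
  { intros w Hw. apply Cdiff_of_ex_derive, hd, QU, Hw. }
  set (Mf := Cmod (f (RtoC y0)) + 1).
  assert (HM : forall w, inR (y0 - s) (y0 + s) (0 - s) (0 + s) w -> Cmod (f w) <= Mf).
  { intros w [[W1 W2] [W3 W4]].
    assert (Cmod (w - RtoC y0)%C < d1).
    { eapply Rle_lt_trans. apply Cmod_le_sum. rewrite fst_minus, snd_minus. unfold RtoC; simpl.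
      unfold Rabs; destruct Rcase_abs; destruct Rcase_abs; lra. }
    specialize (K1 w H). generalize (Cmod_triangle (f w - f (RtoC y0))%C (f (RtoC y0))).
    replace (f w - f (RtoC y0) + f (RtoC y0))%C with (f w) by ring. unfold Mf. lra. }
  set (Kk := Kc s).
  assert (PK : 0 < Cmod Kk) by (apply Cmod_gt_0, K0_nz; lra).
  assert (PM : 0 <= Mf) by (unfold Mf; generalize (Cmod_ge_0 (f (RtoC y0))); lra).
  set (A1 := 32 * Mf / (s * Cmod Kk)). set (A2 := 64 * Mf / (s * s * Cmod Kk)).
  set (A3 := 768 * Mf / (s * s * Cmod Kk)).
  assert (P1 : 0 <= A1) by (unfold A1; apply Rmult_le_pos; [lra| apply Rlt_le, Rinv_0_lt_compat; nra]).
  assert (P2 : 0 <= A2) by (unfold A2; apply Rmult_le_pos; [lra| apply Rlt_le, Rinv_0_lt_compat;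
    apply Rmult_lt_0_compat; nra]).
  assert (P3 : 0 <= A3) by (unfold A3; apply Rmult_le_pos; [lra| apply Rlt_le, Rinv_0_lt_compat;
    apply Rmult_lt_0_compat; nra]).
  exists (s / 4), (G f y0 0 s), (A1 + A2 + A3 + 1).
  split. lra. split. lra.
  intros z z' Hz Hz'.
  assert (In : forall u, Cmod (u - RtoC y0)%C < s / 4 -> inner y0 0 s u).
  { intros u Hu. generalize (Cmod_fst (u - RtoC y0)%C) (Cmod_snd (u - RtoC y0)%C).
    rewrite fst_minus, snd_minus. unfold RtoC in *; simpl. intros. unfold inner. split; lra. }
  assert (Iz := In z Hz). assert (Iz' := In z' Hz').
  generalize (Cmod_ge_0 (z' - z)%C). intros Pz.
  split. { apply QU. apply (inner_in y0 0 s Hs z Iz). }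
  split. { eapply Rle_trans. apply (est_lip f y0 0 s Mf Hs Hf HM z z' Iz Iz').
    apply Rmult_le_compat_r. auto. fold Kk. fold A1. lra. }
  split. { eapply Rle_trans. apply (est_taylor f y0 0 s Mf Hs Hf HM z z' Iz Iz').
    apply Rmult_le_compat_r. nra. fold Kk. fold A2. lra. }
  split. { eapply Rle_trans. apply (est_G_bound f y0 0 s Mf Hs Hf HM z Iz). fold Kk. fold A1. lra. }
  { eapply Rle_trans. apply (est_G_lip f y0 0 s Mf Hs Hf HM z z' Iz Iz').
    apply Rmult_le_compat_r. auto. fold Kk. fold A3. lra. }
Qed.

Lemma scal_CR (r : R) (d : C) : @scal R_AbsRing C_R_NormedModule r d = (RtoC r * d)%C.
Proof.
  destruct d as [d1 d2]. unfold scal; simpl. unfold prod_scal; simpl. unfold scal; simpl. unfold mult; simpl.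
  unfold Cmult, RtoC; simpl. f_equal; ring.
Qed.

Lemma is_derive_quad (F : R -> C) (t0 : R) (d : C) (del K : R) :
  0 < del -> 0 <= K ->
  (forall t, Rabs (t - t0) < del -> Cmod (F t - F t0 - RtoC (t - t0) * d)%C <= K * ((t - t0) * (t - t0))) ->
  @is_derive R_AbsRing C_R_NormedModule F t0 d.
Proof.
  intros Hd HK H. split. apply is_linear_scal_l.
  intros x Hx. apply (@is_filter_lim_locally_unique R_AbsRing R_NormedModule) in Hx. subst x.
  intros eps. exists (mkposreal (Rmin del (eps / (K + 1))) ltac:(apply Rmin_pos; [lra| apply Rdiv_lt_0_compat; [apply cond_pos| lra]])).
  intros t Ht. simpl in Ht. unfold ball in Ht; simpl in Ht. unfold AbsRing_ball, abs, minus, plus, opp in Ht; simpl in Ht.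
  change (Rabs (t + - t0) < Rmin del (eps / (K + 1))) in Ht.
  replace (t + - t0) with (t - t0) in Ht by ring.
  assert (H1 : Rabs (t - t0) < del) by (eapply Rlt_le_trans; [exact Ht| apply Rmin_l]).
  assert (H2 : Rabs (t - t0) < eps / (K + 1)) by (eapply Rlt_le_trans; [exact Ht| apply Rmin_r]).
  specialize (H t H1).
  change (@norm R_AbsRing C_R_NormedModule (minus (minus (F t) (F t0)) (scal (minus t t0) d)) <= eps * @norm R_AbsRing R_NormedModule (minus t t0)).
  rewrite normCR, scal_CR. unfold minus at 3. unfold plus, opp; simpl.
  change (norm (t + - t0)) with (Rabs (t + - t0)). replace (t + - t0) with (t - t0) by ring.
  unfold minus, plus, opp; simpl.
  replace (F t + - F t0 + - (RtoC (t - t0) * d))%C with (F t - F t0 - RtoC (t - t0) * d)%C by ring.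
  eapply Rle_trans. exact H.
  assert (E : (t - t0) * (t - t0) = Rabs (t - t0) * Rabs (t - t0)).
  { rewrite <- Rabs_mult. rewrite Rabs_right. auto. apply Rle_ge, Rle_0_sqr. }
  rewrite E. generalize (Rabs_pos (t - t0)). intros P.
  assert (Rabs (t - t0) * (K + 1) < eps).
  { apply (Rmult_lt_reg_r (/ (K + 1))). apply Rinv_0_lt_compat; lra.
    rewrite Rmult_assoc, Rinv_r, Rmult_1_r by lra. unfold Rdiv in H2. exact H2. }
  assert (Hn : @norm R_AbsRing R_NormedModule (t + - t0) = Rabs (t - t0)).
  { unfold norm; simpl. unfold abs; simpl. f_equal; ring. }
  rewrite Hn. nra.
Qed.

Section IFT.
Variables (U : C -> Prop) (f : C -> C) (y0 : R) (G : C -> C) (rho L : R).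
Hypothesis Hrho : 0 < rho.
Hypothesis HL : 0 < L.
Hypothesis Hcore : forall z z',
    Cmod (z - RtoC y0)%C < rho -> Cmod (z' - RtoC y0)%C < rho ->
    U z /\ Cmod (f z' - f z)%C <= L * Cmod (z' - z)%C /\
    Cmod (f z' - f z - G z * (z' - z))%C <= L * (Cmod (z' - z)%C * Cmod (z' - z)%C) /\
    Cmod (G z) <= L /\ Cmod (G z' - G z)%C <= L * Cmod (z' - z)%C.

Definition cc := f (RtoC y0).
Definition AA := Cmod cc + 2.
Definition del := Rmin (rho / (2 * AA)) (1 / (2 * L * AA)).
Definition Om (p : R * R) := Rabs (fst p) < del /\ Rabs (snd p - y0) < del.
Definition W (p : R * R) (la : C) := (RtoC (snd p) - la * RtoC (fst p))%C.
Definition T (p : R * R) (la : C) := f (W p la).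

Lemma AA_ge : 2 <= AA.
Proof. unfold AA. generalize (Cmod_ge_0 cc). lra. Qed.
Lemma del_pos : 0 < del.
Proof.
  generalize AA_ge; intro. unfold del. apply Rmin_pos; apply Rdiv_lt_0_compat; try lra; nra.
Qed.
Lemma del_A : del * AA <= rho / 2.
Proof.
  generalize AA_ge; intro. unfold del. eapply Rle_trans. apply Rmult_le_compat_r. lra. apply Rmin_l.
  right. field. lra.
Qed.
Lemma del_LA : L * del * AA <= 1 / 2.
Proof.
  generalize AA_ge; intro. unfold del. rewrite Rmult_assoc.
  eapply Rle_trans. apply Rmult_le_compat_l. lra. apply Rmult_le_compat_r. lra. apply Rmin_r.
  right. field. lra.
Qed.
Lemma del_L : L * del <= 1 / 4.
Proof.
  generalize AA_ge del_LA del_pos; intros. 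
  assert (L * del * 2 <= L * del * AA) by (apply Rmult_le_compat_l; nra). lra.
Qed.

Lemma Cmod_RtoC (r : R) : Cmod (RtoC r) = Rabs r.
Proof. apply Cmod_R. Qed.

Lemma W_near p la : Om p -> Cmod la <= AA - 1 ->
  Cmod (W p la - RtoC y0)%C <= Rabs (snd p - y0) + (AA - 1) * Rabs (fst p).
Proof.
  intros [H1 H2] Hla. unfold W.
  replace (RtoC (snd p) - la * RtoC (fst p) - RtoC y0)%C with (RtoC (snd p - y0) + (- la) * RtoC (fst p))%C.
  2: { unfold RtoC, Cminus, Cplus, Copp, Cmult; simpl. f_equal; ring. }
  eapply Rle_trans. apply Cmod_triangle. rewrite Cmod_mult, Cmod_opp, !Cmod_RtoC.
  generalize (Rabs_pos (fst p)). nra.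
Qed.

Lemma W_bnd p la : Om p -> Cmod la <= AA - 1 -> Cmod (W p la - RtoC y0)%C < del * AA.
Proof.
  intros Hp Hla. generalize (W_near p la Hp Hla) del_A del_pos AA_ge. destruct Hp as [H1 H2].
  intros. generalize (Rabs_pos (fst p)). intros.
  assert ((AA - 1) * Rabs (fst p) <= (AA - 1) * del) by (apply Rmult_le_compat_l; lra). nra.
Qed.

Lemma W_in p la : Om p -> Cmod la <= AA - 1 -> Cmod (W p la - RtoC y0)%C < rho.
Proof.
  intros Hp Hla. generalize (W_bnd p la Hp Hla) del_A Hrho. lra.
Qed.

Lemma y0_in : Cmod (RtoC y0 - RtoC y0)%C < rho.
Proof. replace (RtoC y0 - RtoC y0)%C with (RtoC 0) by ring. rewrite Cmod_0. lra. Qed.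

Lemma ball_A la : Cmod (la - cc)%C <= 1 -> Cmod la <= AA - 1.
Proof.
  intros H. unfold AA. generalize (Cmod_triangle (la - cc)%C cc).
  replace (la - cc + cc)%C with la by ring. lra.
Qed.

Lemma T_ball p la : Om p -> Cmod (la - cc)%C <= 1 -> Cmod (T p la - cc)%C <= 1 / 2.
Proof.
  intros Hp Hla. assert (HA := ball_A la Hla).
  destruct (Hcore (RtoC y0) (W p la) y0_in (W_in p la Hp HA)) as (_ & K & _).
  unfold T, cc. eapply Rle_trans. exact K.
  generalize (W_bnd p la Hp HA) del_LA. intros.
  apply Rle_trans with (L * (del * AA)). apply Rmult_le_compat_l. lra. lra.
  rewrite <- Rmult_assoc. exact H0.
Qed.

Lemma W_diff p l1 l2 : (W p l1 - W p l2)%C = (- (l1 - l2) * RtoC (fst p))%C.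
Proof. unfold W. ring. Qed.

Lemma T_contr p l1 l2 : Om p -> Cmod (l1 - cc)%C <= 1 -> Cmod (l2 - cc)%C <= 1 ->
  Cmod (T p l1 - T p l2)%C <= 1 / 2 * Cmod (l1 - l2)%C.
Proof.
  intros Hp H1 H2.
  destruct (Hcore (W p l2) (W p l1) (W_in p l2 Hp (ball_A _ H2)) (W_in p l1 Hp (ball_A _ H1))) as (_ & K & _).
  unfold T. eapply Rle_trans. exact K. rewrite W_diff, Cmod_mult, Cmod_opp, Cmod_RtoC.
  generalize del_L (Cmod_ge_0 (l1 - l2)%C) (Rabs_pos (fst p)). destruct Hp as [Hx _]. intros.
  assert (L * Rabs (fst p) <= L * del) by (apply Rmult_le_compat_l; lra). nra.
Qed.

Lemma fp_unique p l1 l2 : Om p -> Cmod (l1 - cc)%C <= 1 -> Cmod (l2 - cc)%C <= 1 ->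
  l1 = T p l1 -> l2 = T p l2 -> l1 = l2.
Proof.
  intros Hp H1 H2 E1 E2. assert (K := T_contr p l1 l2 Hp H1 H2). rewrite <- E1, <- E2 in K.
  apply Ceq_minus. apply Cmod_eq_0. generalize (Cmod_ge_0 (l1 - l2)%C). lra.
Qed.

Fixpoint it (p : R * R) (n : nat) : C := match n with O => cc | S k => T p (it p k) end.

Lemma it_ball p n : Om p -> Cmod (it p n - cc)%C <= 1 / 2.
Proof.
  intros Hp. destruct n; simpl.
  - replace (cc - cc)%C with (RtoC 0) by ring. rewrite Cmod_0. lra.
  - apply T_ball. auto. induction n; simpl.
    + replace (cc - cc)%C with (RtoC 0) by ring. rewrite Cmod_0. lra.
    + generalize (T_ball p (it p n) Hp IHn). lra.
Qed.

Lemma it_ball1 p n : Om p -> Cmod (it p n - cc)%C <= 1.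
Proof. intros Hp. generalize (it_ball p n Hp). lra. Qed.

Lemma it_step p n : Om p -> Cmod (it p (S n) - it p n)%C <= (/ 2) ^ n.
Proof.
  intros Hp. induction n.
  - simpl. generalize (T_ball p cc Hp). replace (cc - cc)%C with (RtoC 0) by ring. rewrite Cmod_0.
    intros H. generalize (H ltac:(lra)). lra.
  - change (it p (S (S n))) with (T p (it p (S n))). change (it p (S n)) with (T p (it p n)) at 2.
    eapply Rle_trans. apply T_contr; auto; apply it_ball1; auto.
    simpl. change (T p (it p n)) with (it p (S n)). lra.
Qed.

Lemma it_cauchy p n k : Om p -> Cmod (it p (n + k) - it p n)%C <= 2 * (/ 2) ^ n - 2 * (/ 2) ^ (n + k).
Proof.
  intros Hp. induction k.
  - rewrite Nat.add_0_r. replace (it p n - it p n)%C with (RtoC 0) by ring. rewrite Cmod_0. lra.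
  - rewrite Nat.add_succ_r.
    replace (it p (S (n + k)) - it p n)%C with ((it p (S (n + k)) - it p (n + k)) + (it p (n + k) - it p n))%C by ring.
    eapply Rle_trans. apply Cmod_triangle. generalize (it_step p (n + k) Hp). intros.
    replace ((/ 2) ^ S (n + k)) with (/ 2 * (/ 2) ^ (n + k)) by reflexivity. lra.
Qed.

Lemma half_pow_pos n : 0 < (/ 2) ^ n.
Proof. apply pow_lt. lra. Qed.

Lemma half_pow_small eps : 0 < eps -> exists N, forall n, (N <= n)%nat -> (/ 2) ^ n < eps.
Proof.
  intros He. destruct (pow2_big 1 eps He) as [N HN]. exists N. intros n Hn.
  rewrite pow_inv. 
  assert (2 ^ N <= 2 ^ n) by (apply Rle_pow; [lra| exact Hn]).
  assert (0 < 2 ^ N) by (apply pow_lt; lra).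
  apply (Rmult_lt_reg_r (2 ^ n)). lra. rewrite Rinv_l by lra. nra.
Qed.

Lemma it_cauchy2 p eps : Om p -> 0 < eps -> exists N, forall n m, (N <= n)%nat -> (N <= m)%nat ->
  Cmod (it p m - it p n)%C < eps.
Proof.
  intros Hp He. destruct (half_pow_small (eps / 2)) as [N HN]. lra.
  exists N. intros n m Hn Hm.
  assert (Hk : forall a b, (N <= a)%nat -> Cmod (it p (a + b) - it p a)%C < eps).
  { intros a b Ha. eapply Rle_lt_trans. apply it_cauchy; auto.
    generalize (HN a Ha) (half_pow_pos (a + b)). lra. }
  destruct (Nat.le_ge_cases n m) as [E|E].
  - replace m with (n + (m - n))%nat by lia. apply Hk; auto.
  - replace n with (m + (n - m))%nat by lia. rewrite Cmod_sym. apply Hk; auto.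
Qed.

Lemma le_eps (x a : R) : (forall eps, 0 < eps -> x <= a + eps) -> x <= a.
Proof.
  intros H. apply Rnot_lt_le. intros Hl. specialize (H ((x - a) / 2) ltac:(lra)). lra.
Qed.

Lemma fp_exists p : Om p -> exists la, Cmod (la - cc)%C <= 1 / 2 /\ la = T p la.
Proof.
  intros Hp.
  assert (C1 : Cauchy_crit (fun n => fst (it p n))).
  { intros eps He. destruct (it_cauchy2 p eps Hp He) as [N HN]. exists N. intros n m Hn Hm.
    unfold R_dist. eapply Rle_lt_trans. 2: apply (HN m n); lia.
    generalize (Cmod_fst (it p n - it p m)%C). rewrite fst_minus. auto. }
  assert (C2 : Cauchy_crit (fun n => snd (it p n))).
  { intros eps He. destruct (it_cauchy2 p eps Hp He) as [N HN]. exists N. intros n m Hn Hm.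
    unfold R_dist. eapply Rle_lt_trans. 2: apply (HN m n); lia.
    generalize (Cmod_snd (it p n - it p m)%C). rewrite snd_minus. auto. }
  destruct (Rcomplete.R_complete _ C1) as [l1 Hl1].
  destruct (Rcomplete.R_complete _ C2) as [l2 Hl2].
  set (l := (l1, l2) : C).
  assert (Conv : forall eps, 0 < eps -> exists N, forall n, (N <= n)%nat -> Cmod (it p n - l)%C < eps).
  { intros eps He. destruct (Hl1 (eps / 2) ltac:(lra)) as [N1 K1]. destruct (Hl2 (eps / 2) ltac:(lra)) as [N2 K2].
    exists (max N1 N2). intros n Hn. eapply Rle_lt_trans. apply Cmod_le_sum.
    rewrite fst_minus, snd_minus. unfold l; simpl.
    specialize (K1 n ltac:(lia)). specialize (K2 n ltac:(lia)). unfold R_dist in K1, K2. lra. }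
  assert (Lb : Cmod (l - cc)%C <= 1 / 2).
  { apply le_eps. intros eps He. destruct (Conv eps He) as [N HN].
    specialize (HN N (le_n N)). generalize (it_ball p N Hp). intros.
    replace (l - cc)%C with ((it p N - cc) - (it p N - l))%C by ring.
    eapply Rle_trans. apply Cmod_minus_le. lra. }
  exists l. split. exact Lb.
  apply Ceq_minus. apply Cmod_eq_0. apply Rle_antisym. 2: apply Cmod_ge_0.
  apply le_eps. intros eps He. rewrite Rplus_0_l.
  destruct (Conv (eps / 2) ltac:(lra)) as [N HN].
  assert (A1 := HN N (le_n N)). assert (A2 := HN (S N) ltac:(lia)).
  assert (A3 := T_contr p l (it p N) Hp ltac:(lra) (it_ball1 p N Hp)).
  replace (l - T p l)%C with (- (it p (S N) - l) - (T p l - T p (it p N)))%C by (simpl; ring).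
  eapply Rle_trans. apply Cmod_minus_le. rewrite Cmod_opp. rewrite Cmod_sym in A1. lra.
Qed.

Lemma fp_total p : exists la, Om p -> Cmod (la - cc)%C <= 1 / 2 /\ la = T p la.
Proof.
  destruct (classic (Om p)) as [H|H].
  - destruct (fp_exists p H) as [la Hla]. exists la. intros _. exact Hla.
  - exists cc. intros H'. contradiction.
Qed.

Definition lam (p : R * R) : C := proj1_sig (constructive_indefinite_description _ (fp_total p)).

Lemma lam_spec p : Om p -> Cmod (lam p - cc)%C <= 1 / 2 /\ lam p = T p (lam p).
Proof. unfold lam. destruct (constructive_indefinite_description _ (fp_total p)) as [la Hla]. simpl. exact Hla. Qed.

Lemma lam_unique p mu : Om p -> Cmod (mu - cc)%C <= 1 -> mu = T p mu -> mu = lam p.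
Proof.
  intros Hp H1 H2. destruct (lam_spec p Hp) as [K1 K2].
  apply (fp_unique p); auto. lra.
Qed.

Lemma lam_A p : Om p -> Cmod (lam p) <= AA - 1.
Proof. intros Hp. apply ball_A. destruct (lam_spec p Hp). lra. Qed.

Definition Wl p := W p (lam p).

Lemma Wl_in p : Om p -> Cmod (Wl p - RtoC y0)%C < rho.
Proof. intros Hp. apply W_in; auto. apply lam_A, Hp. Qed.

Lemma lam_eq p : Om p -> lam p = f (Wl p).
Proof. intros Hp. destruct (lam_spec p Hp) as [_ E]. exact E. Qed.

Lemma Wl_diff p q : (Wl q - Wl p)%C =
  (RtoC (snd q - snd p) - (lam q - lam p) * RtoC (fst q) - lam p * RtoC (fst q - fst p))%C.
Proof. unfold Wl, W. rewrite !RtoC_minus. ring. Qed.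

Lemma lam_lip p q : Om p -> Om q ->
  Cmod (lam q - lam p)%C <= 2 * L * AA * (Rabs (fst q - fst p) + Rabs (snd q - snd p)) /\
  Cmod (Wl q - Wl p)%C <= 2 * AA * (Rabs (fst q - fst p) + Rabs (snd q - snd p)).
Proof.
  intros Hp Hq.
  set (a := Rabs (fst q - fst p)). set (b := Rabs (snd q - snd p)).
  set (D := Cmod (lam q - lam p)%C).
  assert (Pa : 0 <= a) by apply Rabs_pos. assert (Pb : 0 <= b) by apply Rabs_pos.
  assert (PD : 0 <= D) by apply Cmod_ge_0.
  assert (HAp := lam_A p Hp). generalize AA_ge del_L del_pos; intros HA HLd Hd.
  assert (Hxq : Rabs (fst q) < del) by (destruct Hq; auto).
  assert (Ew : Cmod (Wl q - Wl p)%C <= b + D * del + (AA - 1) * a).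
  { rewrite Wl_diff. unfold Cminus. eapply Rle_trans. apply Cmod_triangle.
    rewrite Cmod_opp. eapply Rle_trans. apply Rplus_le_compat_r. apply Cmod_triangle.
    rewrite Cmod_opp, !Cmod_mult, !Cmod_RtoC. fold b. fold D. fold a.
    apply Rplus_le_compat. apply Rplus_le_compat_l. apply Rmult_le_compat_l; auto; lra.
    apply Rmult_le_compat_r; auto. }
  destruct (Hcore (Wl p) (Wl q) (Wl_in p Hp) (Wl_in q Hq)) as (_ & K & _).
  rewrite <- (lam_eq p Hp), <- (lam_eq q Hq) in K. fold D in K.
  assert (K2 : D <= L * b + L * del * D + L * (AA - 1) * a).
  { eapply Rle_trans. exact K. apply Rle_trans with (L * (b + D * del + (AA - 1) * a)).
    apply Rmult_le_compat_l; lra. right; ring. }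
  assert (HLdD : L * del * D <= 1 / 4 * D) by (apply Rmult_le_compat_r; auto).
  assert (D3 : D <= 4 / 3 * L * (b + (AA - 1) * a)) by lra.
  split.
  - eapply Rle_trans. exact D3. 
    assert (L * (b + (AA - 1) * a) <= L * AA * (a + b)).
    { assert (b + (AA - 1) * a <= AA * (a + b)) by nra. 
      rewrite Rmult_assoc. apply Rmult_le_compat_l; lra. }
    assert (0 <= L * (b + (AA - 1) * a)) by (apply Rmult_le_pos; nra). lra.
  - eapply Rle_trans. exact Ew.
    assert (D * del <= 4 / 3 * (L * del) * (b + (AA - 1) * a)).
    { apply Rle_trans with (4 / 3 * L * (b + (AA - 1) * a) * del).
      apply Rmult_le_compat_r; lra. right; ring. }
    assert (4 / 3 * (L * del) * (b + (AA - 1) * a) <= 1 / 3 * (b + (AA - 1) * a)).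
    { apply Rle_trans with (4 / 3 * (1 / 4) * (b + (AA - 1) * a)).
      apply Rmult_le_compat_r. nra. apply Rmult_le_compat_l; lra. right; field. }
    nra.
Qed.

Definition Gp p := G (Wl p).
Definition Dp p := (1 + Gp p * RtoC (fst p))%C.
Definition dyf p := (Gp p / Dp p)%C.
Definition dxf p := (- lam p * dyf p)%C.

Lemma Gp_bound p : Om p -> Cmod (Gp p) <= L.
Proof. intros Hp. destruct (Hcore (Wl p) (Wl p) (Wl_in p Hp) (Wl_in p Hp)) as (_ & _ & _ & K & _). exact K. Qed.

Lemma Dp_bound p : Om p -> 3 / 4 <= Cmod (Dp p).
Proof.
  intros Hp. unfold Dp. generalize (Cmod_rev 1 (- (Gp p * RtoC (fst p)))%C).
  replace (1 - - (Gp p * RtoC (fst p)))%C with (1 + Gp p * RtoC (fst p))%C by ring.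
  rewrite Cmod_opp, Cmod_mult, !Cmod_RtoC, Rabs_R1. intros.
  assert (Cmod (Gp p) * Rabs (fst p) <= 1 / 4).
  { generalize (Gp_bound p Hp) del_L (Cmod_ge_0 (Gp p)) (Rabs_pos (fst p)). destruct Hp as [Hx _]. intros. nra. }
  lra.
Qed.

Lemma Dp_nz p : Om p -> Dp p <> 0%C.
Proof. intros Hp E. generalize (Dp_bound p Hp). rewrite E, Cmod_0. lra. Qed.

Lemma dyf_bound p : Om p -> Cmod (dyf p) <= 2 * L.
Proof.
  intros Hp. unfold dyf. rewrite Cmod_div by (apply Dp_nz, Hp).
  generalize (Gp_bound p Hp) (Dp_bound p Hp) (Cmod_ge_0 (Gp p)). intros.
  apply Rmult_le_reg_r with (Cmod (Dp p)). lra. unfold Rdiv. rewrite Rmult_assoc, Rinv_l by lra. nra.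
Qed.

Lemma Om_open p : Om p -> exists r, 0 < r /\ forall q, Rabs (fst q - fst p) < r -> Rabs (snd q - snd p) < r -> Om q.
Proof.
  intros [H1 H2]. exists (Rmin (del - Rabs (fst p)) (del - Rabs (snd p - y0))). split.
  apply Rmin_pos; lra. intros q K1 K2.
  assert (K1' : Rabs (fst q - fst p) < del - Rabs (fst p)) by (eapply Rlt_le_trans; [exact K1| apply Rmin_l]).
  assert (K2' : Rabs (snd q - snd p) < del - Rabs (snd p - y0)) by (eapply Rlt_le_trans; [exact K2| apply Rmin_r]).
  split.
  - replace (fst q) with ((fst q - fst p) + fst p) by ring. eapply Rle_lt_trans. apply Rabs_triang. lra.
  - replace (snd q - y0) with ((snd q - snd p) + (snd p - y0)) by ring. eapply Rle_lt_trans. apply Rabs_triang. lra.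
Qed.

Lemma alg_y (Dl Dw E g x h D : C) : D = (1 + g * x)%C -> Dw = (h - Dl * x)%C -> E = (Dl - g * Dw)%C ->
  D <> 0%C -> (Dl - h * (g / D))%C = (E / D)%C.
Proof. intros -> -> -> HD. field. exact HD. Qed.

Lemma alg_x (Dl Dw E g x h l D : C) : D = (1 + g * x)%C -> Dw = (- (Dl * (x + h) + l * h))%C -> E = (Dl - g * Dw)%C ->
  D <> 0%C -> (Dl - h * (- l * (g / D)))%C = ((E - g * Dl * h) / D)%C.
Proof. intros -> -> -> HD. field. exact HD. Qed.

Lemma taylor_E p q : Om p -> Om q ->
  Cmod (lam q - lam p - Gp p * (Wl q - Wl p))%C <= L * (Cmod (Wl q - Wl p)%C * Cmod (Wl q - Wl p)%C).
Proof.
  intros Hp Hq. destruct (Hcore (Wl p) (Wl q) (Wl_in p Hp) (Wl_in q Hq)) as (_ & _ & K & _).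
  rewrite (lam_eq p Hp), (lam_eq q Hq). exact K.
Qed.

Lemma part_y p : Om p -> is_partial_y lam p (dyf p).
Proof.
  intros Hp. destruct (Om_open p Hp) as [r [Hr Hq]]. unfold is_partial_y.
  generalize AA_ge; intros HA.
  apply (is_derive_quad _ _ _ r (8 * L * AA * AA)). auto. nra.
  intros t Ht.
  set (q := (fst p, t)).
  assert (Oq : Om q). { apply Hq; unfold q; simpl. rewrite Rminus_eq_0, Rabs_R0. auto. auto. }
  cbv beta. change (lam (fst p, t)) with (lam q).
  assert (Ep : lam (@pair R R (fst p) (snd p)) = lam p) by (destruct p; reflexivity).
  change (lam (@pair R (AbsRing.sort R_AbsRing) (fst p) (snd p))) with (lam (@pair R R (fst p) (snd p))).
  rewrite Ep. unfold dyf.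
  rewrite (alg_y (lam q - lam p) (Wl q - Wl p) (lam q - lam p - Gp p * (Wl q - Wl p)) (Gp p) (RtoC (fst p)) (RtoC (t - snd p)) (Dp p)).
  2: reflexivity.
  2: { unfold Wl, W, q; simpl. rewrite RtoC_minus. ring. }
  2: ring.
  2: apply Dp_nz, Hp.
  destruct (lam_lip p q Hp Oq) as [_ Lw].
  unfold q in Lw; simpl in Lw. rewrite Rminus_eq_0, Rabs_R0, Rplus_0_l in Lw.
  assert (TE := taylor_E p q Hp Oq).
  rewrite Cmod_div by (apply Dp_nz, Hp).
  generalize (Dp_bound p Hp) (Cmod_ge_0 (Wl q - Wl p)%C) (Cmod_ge_0 (lam q - lam p - Gp p * (Wl q - Wl p))%C). intros HD P1 P2.
  apply Rmult_le_reg_r with (Cmod (Dp p)). lra. unfold Rdiv. rewrite Rmult_assoc, Rinv_l by lra. rewrite Rmult_1_r.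
  assert (Hsq : Rabs (t - snd p) * Rabs (t - snd p) = (t - snd p) * (t - snd p)).
  { rewrite <- Rabs_mult. apply Rabs_right. apply Rle_ge, Rle_0_sqr. }
  assert (Cmod (Wl q - Wl p)%C * Cmod (Wl q - Wl p)%C <= 4 * AA * AA * ((t - snd p) * (t - snd p))).
  { rewrite <- Hsq. apply Rle_trans with ((2 * AA * Rabs (t - snd p)) * (2 * AA * Rabs (t - snd p))).
    apply Rmult_le_compat; auto. right; ring. }
  assert (0 <= (t - snd p) * (t - snd p)) by apply Rle_0_sqr.
  assert (L * (Cmod (Wl q - Wl p)%C * Cmod (Wl q - Wl p)%C) <= L * (4 * AA * AA * ((t - snd p) * (t - snd p)))) by (apply Rmult_le_compat_l; lra).
  assert (0 <= L * (4 * AA * AA * ((t - snd p) * (t - snd p)))) by (apply Rmult_le_pos; [lra| nra]).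
  nra.
Qed.

Lemma part_x p : Om p -> is_partial_x lam p (dxf p).
Proof.
  intros Hp. destruct (Om_open p Hp) as [r [Hr Hq]]. unfold is_partial_x.
  generalize AA_ge; intros HA.
  apply (is_derive_quad _ _ _ r (4 * L * L * AA + 8 * L * AA * AA)). auto. nra.
  intros t Ht.
  set (q := (t, snd p)).
  assert (Oq : Om q). { apply Hq; unfold q; simpl. auto. rewrite Rminus_eq_0, Rabs_R0. auto. }
  cbv beta. change (lam (t, snd p)) with (lam q).
  assert (Ep : lam (@pair R R (fst p) (snd p)) = lam p) by (destruct p; reflexivity).
  change (lam (@pair (AbsRing.sort R_AbsRing) R (fst p) (snd p))) with (lam (@pair R R (fst p) (snd p))).
  rewrite Ep. unfold dxf, dyf.
  rewrite (alg_x (lam q - lam p) (Wl q - Wl p) (lam q - lam p - Gp p * (Wl q - Wl p)) (Gp p) (RtoC (fst p)) (RtoC (t - fst p)) (lam p) (Dp p)).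
  2: reflexivity.
  2: { unfold Wl, W, q; simpl. rewrite RtoC_minus. ring. }
  2: ring.
  2: apply Dp_nz, Hp.
  destruct (lam_lip p q Hp Oq) as [Ll Lw].
  unfold q in Lw, Ll; simpl in Lw, Ll. rewrite Rminus_eq_0, Rabs_R0, Rplus_0_r in Lw, Ll.
  assert (TE := taylor_E p q Hp Oq).
  rewrite Cmod_div by (apply Dp_nz, Hp).
  generalize (Dp_bound p Hp) (Cmod_ge_0 (Wl q - Wl p)%C) (Cmod_ge_0 (lam q - lam p - Gp p * (Wl q - Wl p))%C). intros HD P1 P2.
  apply Rmult_le_reg_r with (Cmod (Dp p)). lra. unfold Rdiv. rewrite Rmult_assoc, Rinv_l by lra. rewrite Rmult_1_r.
  set (h := t - fst p) in *.
  assert (Hsq : Rabs h * Rabs h = h * h).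
  { rewrite <- Rabs_mult. apply Rabs_right. apply Rle_ge, Rle_0_sqr. }
  generalize (Rabs_pos h). intros Ph.
  assert (B1 : Cmod (Wl q - Wl p)%C * Cmod (Wl q - Wl p)%C <= 4 * AA * AA * (h * h)).
  { rewrite <- Hsq. apply Rle_trans with ((2 * AA * Rabs h) * (2 * AA * Rabs h)).
    apply Rmult_le_compat; auto. right; ring. }
  assert (B2 : Cmod (Gp p * (lam q - lam p) * RtoC h)%C <= L * (2 * L * AA * Rabs h) * Rabs h).
  { rewrite !Cmod_mult, Cmod_RtoC. generalize (Gp_bound p Hp) (Cmod_ge_0 (Gp p)) (Cmod_ge_0 (lam q - lam p)%C). intros.
    apply Rmult_le_compat_r. auto. apply Rmult_le_compat; auto. }
  assert (B3 : Cmod (lam q - lam p - Gp p * (Wl q - Wl p) - Gp p * (lam q - lam p) * RtoC h)%C <=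
     L * (4 * AA * AA * (h * h)) + 2 * L * L * AA * (h * h)).
  { eapply Rle_trans. apply Cmod_minus_le.
    assert (L * (Cmod (Wl q - Wl p)%C * Cmod (Wl q - Wl p)%C) <= L * (4 * AA * AA * (h * h))) by (apply Rmult_le_compat_l; lra).
    assert (L * (2 * L * AA * Rabs h) * Rabs h = 2 * L * L * AA * (h * h)) by (rewrite <- Hsq; ring).
    lra. }
  assert (0 <= h * h) by apply Rle_0_sqr.
  assert (0 <= L * (4 * AA * AA * (h * h)) + 2 * L * L * AA * (h * h)).
  { assert (0 <= L * (4 * AA * AA * (h * h))) by (apply Rmult_le_pos; [lra| nra]).
    assert (0 <= 2 * L * L * AA * (h * h)) by (apply Rmult_le_pos; [|lra]; nra). lra. }
  nra.
Qed.

Lemma cont_Om (F : R * R -> C) p B : Om p -> 0 <= B ->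
  (forall q, Om q -> Cmod (F q - F p)%C <= B * (Rabs (fst q - fst p) + Rabs (snd q - snd p))) ->
  @continuous (prod_UniformSpace R_UniformSpace R_UniformSpace) C_UniformSpace F p.
Proof.
  intros Hp HB H. apply cont_of_Cmod. intros eps He. apply locally_R2.
  destruct (Om_open p Hp) as [r [Hr Hq]].
  exists (Rmin r (eps / (2 * (B + 1)))). split.
  { apply Rmin_pos. auto. apply Rdiv_lt_0_compat; lra. }
  intros q K1 K2.
  assert (A1 : Rabs (fst q - fst p) < r) by (eapply Rlt_le_trans; [exact K1| apply Rmin_l]).
  assert (A2 : Rabs (snd q - snd p) < r) by (eapply Rlt_le_trans; [exact K2| apply Rmin_l]).
  assert (B1 : Rabs (fst q - fst p) < eps / (2 * (B + 1))) by (eapply Rlt_le_trans; [exact K1| apply Rmin_r]).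
  assert (B2 : Rabs (snd q - snd p) < eps / (2 * (B + 1))) by (eapply Rlt_le_trans; [exact K2| apply Rmin_r]).
  eapply Rle_lt_trans. apply H. apply Hq; auto.
  assert (E : B * (2 * (eps / (2 * (B + 1)))) < eps).
  { replace (B * (2 * (eps / (2 * (B + 1))))) with (eps * (B / (B + 1))) by (field; lra).
    assert (B / (B + 1) < 1). { apply Rmult_lt_reg_r with (B + 1). lra. unfold Rdiv. rewrite Rmult_assoc, Rinv_l by lra. lra. }
    nra. }
  generalize (Rabs_pos (fst q - fst p)) (Rabs_pos (snd q - snd p)). intros.
  assert (B * (Rabs (fst q - fst p) + Rabs (snd q - snd p)) <= B * (2 * (eps / (2 * (B + 1))))) by (apply Rmult_le_compat_l; lra).
  lra.
Qed.

Lemma lam_cont p : Om p -> @continuous (prod_UniformSpace R_UniformSpace R_UniformSpace) C_UniformSpace lam p.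
Proof.
  intros Hp. apply (cont_Om _ p (2 * L * AA)). auto. generalize AA_ge. nra.
  intros q Hq. apply (lam_lip p q Hp Hq).
Qed.

Lemma Gp_lip p q : Om p -> Om q -> Cmod (Gp q - Gp p)%C <= L * Cmod (Wl q - Wl p)%C.
Proof.
  intros Hp Hq. destruct (Hcore (Wl p) (Wl q) (Wl_in p Hp) (Wl_in q Hq)) as (_ & _ & _ & _ & K). exact K.
Qed.

Lemma dyf_lip p q : Om p -> Om q ->
  Cmod (dyf q - dyf p)%C <= 2 * (2 * L * AA + L * L) * (Rabs (fst q - fst p) + Rabs (snd q - snd p)).
Proof.
  intros Hp Hq.
  set (sd := Rabs (fst q - fst p) + Rabs (snd q - snd p)).
  assert (Ps : 0 <= sd) by (unfold sd; generalize (Rabs_pos (fst q - fst p)) (Rabs_pos (snd q - snd p)); lra).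
  assert (E : (dyf q - dyf p)%C = (((Gp q - Gp p) + Gp q * Gp p * RtoC (fst p - fst q)) / (Dp q * Dp p))%C).
  { unfold dyf, Dp. rewrite RtoC_minus. field. split; [apply (Dp_nz p Hp)| apply (Dp_nz q Hq)]. }
  rewrite E. rewrite Cmod_div by (apply Cmult_neq_0; apply Dp_nz; auto). rewrite Cmod_mult.
  generalize (Dp_bound p Hp) (Dp_bound q Hq). intros D1 D2.
  assert (N : Cmod ((Gp q - Gp p) + Gp q * Gp p * RtoC (fst p - fst q))%C <= (2 * L * AA + L * L) * sd).
  { eapply Rle_trans. apply Cmod_triangle. rewrite !Cmod_mult, Cmod_RtoC.
    destruct (lam_lip p q Hp Hq) as [_ Lw]. fold sd in Lw.
    assert (K1 : Cmod (Gp q - Gp p)%C <= L * (2 * AA * sd)).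
    { eapply Rle_trans. apply Gp_lip; auto. apply Rmult_le_compat_l; lra. }
    assert (K2 : Cmod (Gp q) * Cmod (Gp p) * Rabs (fst p - fst q) <= L * L * sd).
    { generalize (Gp_bound p Hp) (Gp_bound q Hq) (Cmod_ge_0 (Gp p)) (Cmod_ge_0 (Gp q)) (Rabs_pos (fst p - fst q)).
      intros. rewrite Rabs_minus_sym. assert (Rabs (fst q - fst p) <= sd) by (unfold sd; generalize (Rabs_pos (snd q - snd p)); lra).
      apply Rmult_le_compat. apply Rmult_le_pos; auto. apply Rabs_pos. apply Rmult_le_compat; auto. auto. }
    lra. }
  assert (Hd : 1 / 2 <= Cmod (Dp q) * Cmod (Dp p)) by nra.
  apply Rmult_le_reg_r with (Cmod (Dp q) * Cmod (Dp p)). lra.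
  unfold Rdiv. rewrite Rmult_assoc, Rinv_l by lra. rewrite Rmult_1_r.
  assert (0 <= (2 * L * AA + L * L) * sd) by (apply Rmult_le_pos; [generalize AA_ge; nra| auto]).
  nra.
Qed.

Lemma dyf_cont p : Om p -> @continuous (prod_UniformSpace R_UniformSpace R_UniformSpace) C_UniformSpace dyf p.
Proof.
  intros Hp. apply (cont_Om _ p (2 * (2 * L * AA + L * L))). auto. generalize AA_ge. nra.
  intros q Hq. apply (dyf_lip p q Hp Hq).
Qed.

Lemma dxf_cont p : Om p -> @continuous (prod_UniformSpace R_UniformSpace R_UniformSpace) C_UniformSpace dxf p.
Proof.
  intros Hp. generalize AA_ge; intros HA.
  apply (cont_Om _ p (2 * L * AA * (2 * L) + AA * (2 * (2 * L * AA + L * L)))). auto.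
  { assert (0 <= 2 * L * AA * (2 * L)) by nra. assert (0 <= 2 * (2 * L * AA + L * L)) by nra. nra. }
  intros q Hq. unfold dxf.
  replace (- lam q * dyf q - - lam p * dyf p)%C with (- ((lam q - lam p) * dyf q + lam p * (dyf q - dyf p)))%C by ring.
  rewrite Cmod_opp. eapply Rle_trans. apply Cmod_triangle. rewrite !Cmod_mult.
  destruct (lam_lip p q Hp Hq) as [Ll _].
  assert (K1 := dyf_bound q Hq). assert (K2 := dyf_lip p q Hp Hq). assert (K3 := lam_A p Hp).
  set (sd := Rabs (fst q - fst p) + Rabs (snd q - snd p)) in *.
  assert (Ps : 0 <= sd) by (unfold sd; generalize (Rabs_pos (fst q - fst p)) (Rabs_pos (snd q - snd p)); lra).
  generalize (Cmod_ge_0 (lam q - lam p)%C) (Cmod_ge_0 (dyf q)) (Cmod_ge_0 (lam p)) (Cmod_ge_0 (dyf q - dyf p)%C). intros.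
  assert (Cmod (lam q - lam p)%C * Cmod (dyf q) <= (2 * L * AA * sd) * (2 * L)) by (apply Rmult_le_compat; auto).
  assert (Cmod (lam p) * Cmod (dyf q - dyf p)%C <= AA * (2 * (2 * L * AA + L * L) * sd)) by (apply Rmult_le_compat; auto; lra).
  lra.
Qed.

Lemma Cmod_rev_abs (a b : C) : Rabs (Cmod a - Cmod b) <= Cmod (a - b)%C.
Proof.
  apply Rabs_le. generalize (Cmod_rev a b) (Cmod_rev b a). rewrite (Cmod_sym b a). intros. split; lra.
Qed.

Lemma path_cont (mu : R * R -> C) (x y t : R) :
  @continuous (prod_UniformSpace R_UniformSpace R_UniformSpace) C_UniformSpace mu ((t * x)%R, y) ->
  continuity_pt (fun s => Cmod (mu ((s * x)%R, y) - cc)%C - 3 / 4) t.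
Proof.
  intros Hc. unfold continuity_pt, continue_in, limit1_in, limit_in. intros eps He.
  destruct (locally_R2_inv _ _ (Cmod_of_cont mu ((t * x)%R, y) Hc eps He)) as [d [Hd HP]].
  exists (d / (Rabs x + 1)). split. apply Rdiv_lt_0_compat. lra. generalize (Rabs_pos x); lra.
  intros s [_ Hs]. simpl in Hs. unfold R_dist in Hs. simpl. unfold R_dist.
  replace (Cmod (mu ((s * x)%R, y) - cc)%C - 3 / 4 - (Cmod (mu ((t * x)%R, y) - cc)%C - 3 / 4)) with
    (Cmod (mu ((s * x)%R, y) - cc)%C - Cmod (mu ((t * x)%R, y) - cc)%C) by ring.
  eapply Rle_lt_trans. apply Cmod_rev_abs.
  replace (mu ((s * x)%R, y) - cc - (mu ((t * x)%R, y) - cc))%C with (mu ((s * x)%R, y) - mu ((t * x)%R, y))%C by ring.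
  apply HP; simpl.
  - replace (s * x - t * x) with ((s - t) * x) by ring. rewrite Rabs_mult.
    generalize (Rabs_pos x) (Rabs_pos (s - t)). intros.
    apply Rle_lt_trans with (Rabs (s - t) * (Rabs x + 1)). nra.
    apply Rmult_lt_reg_r with (/ (Rabs x + 1)). apply Rinv_0_lt_compat; lra.
    rewrite Rmult_assoc, Rinv_r, Rmult_1_r by lra. exact Hs.
  - rewrite Rminus_eq_0, Rabs_R0. exact Hd.
Qed.

Lemma f_near y : Rabs (y - y0) < del -> Cmod (f (RtoC y) - cc)%C <= 1 / 4.
Proof.
  intros Hy. generalize del_A del_L AA_ge del_pos. intros.
  assert (Hin : Cmod (RtoC y - RtoC y0)%C < rho).
  { rewrite <- RtoC_minus, Cmod_RtoC. assert (del * 2 <= del * AA) by (apply Rmult_le_compat_l; lra). lra. }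
  destruct (Hcore (RtoC y0) (RtoC y) y0_in Hin) as (_ & K & _).
  unfold cc. eapply Rle_trans. exact K. rewrite <- RtoC_minus, Cmod_RtoC.
  assert (L * Rabs (y - y0) <= L * del) by (apply Rmult_le_compat_l; lra). lra.
Qed.

Lemma uniq (mu : R * R -> C) :
  (forall q, Om q -> @continuous (prod_UniformSpace R_UniformSpace R_UniformSpace) C_UniformSpace mu q) ->
  (forall q, Om q -> mu q = f (RtoC (snd q) - mu q * RtoC (fst q))%C) ->
  forall p, Om p -> mu p = lam p.
Proof.
  intros Hc Hs.
  assert (gap : forall q, Om q -> Cmod (mu q - cc)%C <= 1 -> mu q = lam q /\ Cmod (mu q - cc)%C <= 1 / 2).
  { intros q Hq H. assert (E : mu q = lam q) by (apply lam_unique; auto; apply Hs, Hq).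
    split. auto. rewrite E. apply (lam_spec q Hq). }
  intros [x y] Hp.
  destruct (Rle_dec (Cmod (mu (x, y) - cc)%C) 1) as [H1|H1].
  { apply gap; auto. }
  exfalso.
  assert (Opath : forall t, 0 <= t <= 1 -> Om (t * x, y)).
  { intros t Ht. destruct Hp as [K1 K2]. split; simpl; auto. rewrite Rabs_mult.
    generalize (Rabs_pos x). intros. rewrite (Rabs_right t) by lra. simpl in K1. nra. }
  destruct (Ranalysis5.IVT_interv (fun s => Cmod (mu ((s * x)%R, y) - cc)%C - 3 / 4) 0 1) as [t [Ht E]].
  - intros a Ha. apply path_cont. apply Hc, Opath, Ha.
  - lra.
  - assert (O0 := Opath 0 ltac:(lra)). assert (S0 := Hs _ O0). simpl in S0.
    rewrite Rmult_0_l in S0. replace (RtoC y - mu (0, y) * RtoC 0)%C with (RtoC y) in S0 by ring.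
    rewrite Rmult_0_l. rewrite S0. generalize (f_near y). destruct Hp as [_ K2]. simpl in K2. intros K. 
    specialize (K K2). lra.
  - rewrite Rmult_1_l. lra.
  - assert (Ot := Opath t Ht). destruct (gap _ Ot ltac:(lra)) as [_ K]. lra.
Qed.
End IFT.

Theorem proposition2p4 (U : C -> Prop) (f : C -> C) (y0 : R)
  (hU : open U) (hf : Hol_upper U f) (hy0 : U (RtoC y0))
  (hfy0 : upper_half (f (RtoC y0))) :
  exists Om : R * R -> Prop,
    open Om /\ Om (0%R, y0) /\
    exists lam : R * R -> C,
      C1_on Om lam /\ solves_on U f Om lam /\
      forall mu : R * R -> C,
        C1_on Om mu -> solves_on U f Om mu ->
        forall p, Om p -> mu p = lam p.
Proof.
  destruct (core U f y0 hU hf hy0) as (rho & G & Lc & Hrho & HL & Hcore).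
  exists (Om f y0 rho Lc). split.
  { intros p Hp. apply locally_R2. destruct (Om_open f y0 rho Lc p Hp) as [r [Hr Hq]].
    exists r. split; auto. }
  split.
  { unfold Om. simpl. rewrite Rabs_R0, Rminus_eq_0, Rabs_R0. generalize (del_pos f y0 rho Lc Hrho HL). lra. }
  exists (lam U f y0 G rho Lc Hrho HL Hcore).
  split.
  { exists (dxf U f y0 G rho Lc Hrho HL Hcore), (dyf U f y0 G rho Lc Hrho HL Hcore).
    intros p Hp. split. apply part_x; auto. split. apply part_y; auto.
    split. apply lam_cont; auto. split. apply dxf_cont; auto. apply dyf_cont; auto. }
  split.
  { intros p Hp.
    assert (HW := Wl_in U f y0 G rho Lc Hrho HL Hcore p Hp).
    destruct (Hcore _ _ HW HW) as (HUW & _).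
    assert (E := lam_eq U f y0 G rho Lc Hrho HL Hcore p Hp).
    split. rewrite E. apply (proj2 hf). exact HUW.
    split. exact HUW. exact E. }
  intros mu [dx [dy Hmu]] Hs p Hp.
  apply (uniq U f y0 G rho Lc Hrho HL Hcore mu).
  - intros q Hq. apply (Hmu q Hq).
  - intros q Hq. apply (Hs q Hq).
  - exact Hp.
Qed.
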